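(* Let the sequences be generated by Algorithm iMBA and suppose Assumptions 2, 3 and 4 hold. Then there exist $\widehat k\in\mathbb{N}$ and $\beta_{\overline\lambda}>0$ such that for each $k\ge\widehat k$ there is a vector $\overline\lambda^k\in\mathcal M(u^k,\overline x^k)$ with $\|\overline\lambda^k\|\le\beta_{\overline\lambda}$.
   Context: Problem (P): $\min_{x\in\mathbb{R}^n}F(x):=g_0(x)+\delta_{\mathbb{R}^m_-}(g(x))+\phi(x)$, where $g=(g_1,\dots,g_m)^\top$ and $\delta_{\mathbb{R}^m_-}$ is the indicator of the nonpositive orthant. Assumption 1 (standing): (i) $g_0:\mathbb{R}^n\to(-\infty,\infty]$ is locally Lipschitz and upper-$\mathcal C^2$ at every point of an open convex set $\mathcal O\supset\Gamma:=\{x:g(x)\in\mathbb{R}^m_-\}\neq\emptyset$, and each $g_i:\mathbb{R}^n\to\mathbb{R}$, $i\in[m]$, is locally Lipschitz and upper-$\mathcal C^2$ at every point of $\mathbb{R}^n$; (ii) $\phi:\mathbb{R}^n\to\mathbb{R}$ is convex and $F$ is bounded below on $\Gamma$. $\partial$ denotes the limiting subdifferential; $\partial g(x):=\{V\in\mathbb{R}^{n\times m}: V_i\in\partial g_i(x)\ \forall i\}$. Define $G(x,s,V,L):=g(s)+V^\top(x-s)+\tfrac12\|x-s\|^2L$. Algorithm iMBA (parameters $0<\mu_{\min}\le\mu_{\max}$, $0<L_{\min}\le L_{\max}$, $M,\beta_C,\beta_S,\alpha>0$, $\tau>1$, $x^0\in\Gamma$): at iteration $k$ choose $\xi^k\in\partial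 g_0(x^k)$, $V^k\in\partial g(x^k)$, $\mu_{k,0}\in[\mu_{\min},\mu_{\max}]$, $L^{k,0}\in[L_{\min},L_{\max}]^m$; for $j=0,1,\dots$ choose self-adjoint $\mathcal Q_{k,j}$ with $\mu_{k,j}\mathcal I\preceq\mathcal Q_{k,j}\preceq(\mu_{k,j}+M)\mathcal I$, let $F_{k,j}(x):=g_0(x^k)+\langle\xi^k,x-x^k\rangle+\frac12\langle x-x^k,\mathcal Q_{k,j}(x-x^k)\rangle+\phi(x)$, $\Gamma_{k,j}:=\{x:G(x,x^k,V^k,L^{k,j})\in\mathbb{R}^m_-\}$, $\overline x^{k,j}$ the unique minimizer of $F_{k,j}$ on $\Gamma_{k,j}$, and compute $y^{k,j}$, $v^{k,j}\in\partial\phi(y^{k,j})$, $\lambda^{k,j}\in\mathbb{R}^m_+$ with $F_{k,j}(y^{k,j})\le F_{k,j}(x^k)$, $(-\langle\lambda^{k,j},G(y^{k,j},x^k,V^k,L^{k,j})\rangle)_++\|[G(y^{k,j},x^k,V^k,L^{k,j})]_+\|_\infty\le\frac{\beta_C}2\|y^{k,j}-x^k\|^2$ and $\|\xi^k+\mathcal Q_{k,j}(y^{k,j}-x^k)+v^{k,j}+V^k\lambda^{k,j}+\langle L^{k,j},\lambda^{k,j}\rangle(y^{k,j}-x^k)\|\le\beta_S\|y^{k,j}-x^k\|$. If $g(y^{k,j})\in\mathbb{R}^m_-$ and $F(y^{k,j})\le F(x^k)-\frac\alpha2\|y^{k,j}-x^k\|^2$, accept ($j_k:=j$); else if $g(y^{k,j})\notin\mathbb{R}^m_-$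 set $L^{k,j+1}=\tau L^{k,j}$, $\mu_{k,j+1}=\mu_{k,j}$; else $L^{k,j+1}=L^{k,j}$, $\mu_{k,j+1}=\tau\mu_{k,j}$. Then $x^{k+1}:=y^{k,j_k}$, $(\mu_k,\mathcal Q_k,L^k,v^{k+1},\lambda^{k+1}):=(\mu_{k,j_k},\mathcal Q_{k,j_k},L^{k,j_k},v^{k,j_k},\lambda^{k,j_k})$, $\overline x^k:=\overline x^{k,j_k}$. Assumption 2: for each $k,j$, the multifunction $x\mapsto G(x,x^k,V^k,L^{k,j})-\mathbb{R}^m_-$ is metrically subregular at $(\overline x^{k,j},0)$. Assumption 3: $\{x^k\}$ is bounded; $\omega(x^0)$ denotes its set of cluster points. Parametric data: $\mathbb U:=\mathbb{R}^n\times\mathbb{R}^m_+\times\mathbb{R}^{n\times m}\times\mathbb{R}^n\times\mathbb S_+$ ($\mathbb S_+$ = positive semidefinite self-adjoint linear maps on $\mathbb{R}^n$); for $u=(s,L,V,\xi,\mathcal Q)$: $\theta(u,x):=g_0(s)+\langle\xi,x-s\rangle+\frac12\langle x-s,\mathcal Q(x-s)\rangle$, $H(u,x):=G(x,s,V,L)$, so $\nabla_xH(u,x)\lambda=V\lambda+\langle L,\lambda\rangle(x-s)$; $\mathcal S(u):=\{x:H(u,x)\in\mathbb{R}^m_-\}$; $\Lambda(u,x,y):=\{\lambda\in\mathcal N_{\mathbb{R}^m_-}(H(u,x)):\nabla_xH(u,x)\lambda=y\}$; $\mathcal M(u,x):=\{\lambda\in\mathcal N_{\mathbb{R}^m_-}(H(u,x)):0\in\nabla_x\theta(u,x)+\partial\phi(x)+\nabla_xH(u,x)\lambda\}$.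 The constraint system satisfies the partial bounded multiplier property (BMP) w.r.t. $x$ at $(u^*,x^* )$ with $x^*\in\mathcal S(u^* )$ if there exist $\kappa>0$ and a neighborhood $\mathcal U\times\mathcal V$ of $(u^*,x^* )$ such that for all $u\in\mathcal U$, $x\in\mathcal V\cap\mathcal S(u)$ and $y\in\mathcal N_{\mathcal S(u)}(x)$, $\Lambda(u,x,y)\cap\{\lambda:\|\lambda\|\le\kappa\|y\|\}\neq\emptyset$. Let $u^k:=(x^k,L^k,V^k,\xi^k,\mathcal Q_k)$. Assumption 4: the partial BMP w.r.t. $x$ holds at every cluster point of $\{(u^k,\overline x^k)\}_{k\in\mathbb{N}}$. *)

(* Defs.v *)
From HB Require Import structures.
From mathcomp Require Import all_boot all_order all_algebra.
From mathcomp Require Import boolp classical_sets reals constructive_ereal.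
Set Implicit Arguments. Unset Strict Implicit. Unset Printing Implicit Defensive.
Import Order.TTheory GRing.Theory Num.Theory.
Local Open Scope ring_scope.
Local Open Scope classical_set_scope.

Section IMBADefs.
Variable R : realType.

Definition mnorm p q (A : 'M[R]_(p, q)) : R := Num.sqrt (\sum_i \sum_j A i j ^+ 2).
Definition dot p (a b : 'cV[R]_p) : R := \sum_i a i 0 * b i 0.
Definition infnorm p (a : 'cV[R]_p) : R := \big[Num.max/0]_i `|a i 0|.
Definition pospart p (a : 'cV[R]_p) : 'cV[R]_p := map_mx (fun t => Num.max t 0) a.
Definition nonpos p (a : 'cV[R]_p) : Prop := forall i, a i 0 <= 0.

Definition mx_cvg p q (u : nat -> 'M[R]_(p, q)) (l : 'M[R]_(p, q)) : Prop :=
  forall eps, 0 < eps -> exists N, forall k, (N <= k)%N -> mnorm (u k - l) < eps.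
Definition r_cvg (u : nat -> R) (l : R) : Prop :=
  forall eps, 0 < eps -> exists N, forall k, (N <= k)%N -> `|u k - l| < eps.

Definition rsubdiff p (f : 'cV[R]_p -> R) (x w : 'cV[R]_p) : Prop :=
  forall eps, 0 < eps -> exists2 d, 0 < d &
    forall y, mnorm (y - x) < d -> f x + dot w (y - x) - eps * mnorm (y - x) <= f y.
Definition lsubdiff p (f : 'cV[R]_p -> R) (x w : 'cV[R]_p) : Prop :=
  exists (xs ws : nat -> 'cV[R]_p),
    [/\ mx_cvg xs x, r_cvg (f \o xs) (f x),
        (forall k, rsubdiff f (xs k) (ws k)) & mx_cvg ws w].
Definition rncone p (C : set 'cV[R]_p) (x w : 'cV[R]_p) : Prop :=
  C x /\ forall eps, 0 < eps -> exists2 d, 0 < d &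
    forall z, C z -> mnorm (z - x) < d -> dot w (z - x) <= eps * mnorm (z - x).
Definition ncone p (C : set 'cV[R]_p) (x w : 'cV[R]_p) : Prop :=
  C x /\ exists (xs ws : nat -> 'cV[R]_p),
    [/\ (forall k, C (xs k)), mx_cvg xs x,
        (forall k, rncone C (xs k) (ws k)) & mx_cvg ws w].
Definition dist_le p (A : set 'cV[R]_p) (x : 'cV[R]_p) (c : R) : Prop :=
  forall eps, 0 < eps -> exists2 z, A z & mnorm (x - z) < c + eps.
Definition msubreg p q (S : 'cV[R]_p -> set 'cV[R]_q) (xb : 'cV[R]_p) (yb : 'cV[R]_q)
  : Prop :=
  S xb yb /\ exists2 kappa, 0 <= kappa & exists2 d, 0 < d &
    forall x, mnorm (x - xb) < d -> forall w, S x w ->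
      dist_le [set z | S z yb] x (kappa * mnorm (yb - w)).

Definition loc_lipschitz p (f : 'cV[R]_p -> R) (x : 'cV[R]_p) : Prop :=
  exists2 d, 0 < d & exists c, forall y z,
    mnorm (y - x) < d -> mnorm (z - x) < d -> `|f y - f z| <= c * mnorm (y - z).
(* upper-C^2 at x: f - (rho/2)||.||^2 is concave on a neighbourhood of x
   (Rockafellar--Wets, Thm 10.33 characterization) *)
Definition upper_C2 p (f : 'cV[R]_p -> R) (x : 'cV[R]_p) : Prop :=
  exists2 d, 0 < d & exists2 rho, 0 <= rho &
    forall y z t, mnorm (y - x) < d -> mnorm (z - x) < d -> 0 <= t <= 1 ->
      let h w := f w - rho / 2 * mnorm w ^+ 2 in
      t * h y + (1 - t) * h z <= h (t *: y + (1 - t) *: z).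
Definition convex_fun p (f : 'cV[R]_p -> R) : Prop :=
  forall y z t, 0 <= t <= 1 -> f (t *: y + (1 - t) *: z) <= t * f y + (1 - t) * f z.
Definition open_set p (O : set 'cV[R]_p) : Prop :=
  forall x, O x -> exists2 d, 0 < d & forall y, mnorm (y - x) < d -> O y.
Definition convex_set p (O : set 'cV[R]_p) : Prop :=
  forall x y t, O x -> O y -> 0 <= t <= 1 -> O (t *: x + (1 - t) *: y).

Variables n m : nat.

Definition gvec (g : 'I_m -> 'cV[R]_n -> R) (x : 'cV[R]_n) : 'cV[R]_m := \col_i g i x.
Definition lsubdiff_mx (g : 'I_m -> 'cV[R]_n -> R) (x : 'cV[R]_n) (V : 'M[R]_(n, m))
  : Prop := forall i, lsubdiff (g i) x (col i V).
Definition Fobj (g0 : 'cV[R]_n -> \bar R) (g : 'I_m -> 'cV[R]_n -> R)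
  (phi : 'cV[R]_n -> R) (x : 'cV[R]_n) : \bar R :=
  (g0 x + (if `[< nonpos (gvec g x) >] then 0 else +oo) + (phi x)%:E)%E.
(* G(x,s,V,L) = g(s) + V^T (x - s) + 1/2 ||x - s||^2 L  (also H(u,x)) *)
Definition Gfun (g : 'I_m -> 'cV[R]_n -> R) (x s : 'cV[R]_n) (V : 'M[R]_(n, m))
  (L : 'cV[R]_m) : 'cV[R]_m :=
  gvec g s + V^T *m (x - s) + (2^-1 * mnorm (x - s) ^+ 2) *: L.
(* F_{k,j}(x) with g0x = g0(x^k), xk = x^k *)
Definition Fkj (g0x : R) (xk xi : 'cV[R]_n) (Q : 'M[R]_n) (phi : 'cV[R]_n -> R)
  (x : 'cV[R]_n) : R :=
  g0x + dot xi (x - xk) + 2^-1 * dot (x - xk) (Q *m (x - xk)) + phi x.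

(* ---------- parametric data, u = (s, L, V, xi, Q) ---------- *)
Definition gradH (s : 'cV[R]_n) (V : 'M[R]_(n, m)) (L : 'cV[R]_m) (x : 'cV[R]_n)
  (lam : 'cV[R]_m) : 'cV[R]_n := V *m lam + dot L lam *: (x - s).
Definition Sset g (s : 'cV[R]_n) V L : set 'cV[R]_n :=
  [set x | nonpos (Gfun g x s V L)].
Definition Lam g (s : 'cV[R]_n) V L (x yv : 'cV[R]_n) : set 'cV[R]_m :=
  [set lam | ncone (@nonpos m) (Gfun g x s V L) lam /\ gradH s V L x lam = yv].
(* M(u,x); nabla_x theta(u,x) = xi + Q (x - s) *)
Definition Mset g (phi : 'cV[R]_n -> R) (s : 'cV[R]_n) (L : 'cV[R]_m) V
  (xi : 'cV[R]_n) (Q : 'M[R]_n) (x : 'cV[R]_n) : set 'cV[R]_m :=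
  [set lam | ncone (@nonpos m) (Gfun g x s V L) lam /\
     exists2 w, lsubdiff phi x w & xi + Q *m (x - s) + w + gradH s V L x lam = 0].
Definition inU (L : 'cV[R]_m) (Q : 'M[R]_n) : Prop :=
  [/\ forall i, 0 <= L i 0, Q^T = Q & forall d, 0 <= dot d (Q *m d)].
Definition bmp g (s0 : 'cV[R]_n) (L0 : 'cV[R]_m) (V0 : 'M[R]_(n, m))
  (xi0 : 'cV[R]_n) (Q0 : 'M[R]_n) (x0 : 'cV[R]_n) : Prop :=
  exists2 kappa, 0 < kappa & exists2 d, 0 < d &
    forall s L V xi Q, inU L Q ->
      mnorm (s - s0) < d -> mnorm (L - L0) < d -> mnorm (V - V0) < d ->
      mnorm (xi - xi0) < d -> mnorm (Q - Q0) < d ->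
      forall x, Sset g s V L x -> mnorm (x - x0) < d ->
      forall yv, ncone (Sset g s V L) x yv ->
        exists2 lam, Lam g s V L x yv lam & mnorm lam <= kappa * mnorm yv.
Definition cluster_pt (sx : nat -> 'cV[R]_n) (sL : nat -> 'cV[R]_m)
  (sV : nat -> 'M[R]_(n, m)) (sxi : nat -> 'cV[R]_n) (sQ : nat -> 'M[R]_n)
  (sxb : nat -> 'cV[R]_n) s0 L0 V0 xi0 Q0 x0 : Prop :=
  forall eps, 0 < eps -> forall N, exists2 k, (N <= k)%N &
    mnorm (sx k - s0) < eps /\ mnorm (sL k - L0) < eps /\ mnorm (sV k - V0) < eps /\
    mnorm (sxi k - xi0) < eps /\ mnorm (sQ k - Q0) < eps /\ mnorm (sxb k - x0) < eps.

Record standing_assumption (g0 : 'cV[R]_n -> \bar R) (g : 'I_m -> 'cV[R]_n -> R)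
  (phi : 'cV[R]_n -> R) (O : set 'cV[R]_n) : Prop := {
  sa_g0_codom : forall x, g0 x != -oo%E;
  sa_open : open_set O;
  sa_convex : convex_set O;
  sa_Gamma_sub : forall x, nonpos (gvec g x) -> O x;
  sa_Gamma_ne : exists x, nonpos (gvec g x);
  sa_g0_fin : forall x, O x -> g0 x \is a fin_num;
  sa_g0_lip : forall x, O x -> loc_lipschitz (fun z => fine (g0 z)) x;
  sa_g0_uC2 : forall x, O x -> upper_C2 (fun z => fine (g0 z)) x;
  sa_g_lip : forall i x, loc_lipschitz (g i) x;
  sa_g_uC2 : forall i x, upper_C2 (g i) x;
  sa_phi_cvx : convex_fun phi;
  sa_F_lb : exists c, forall x, nonpos (gvec g x) -> (c%:E <= Fobj g0 g phi x)%E
}.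

Definition accepted g0 g phi (alpha : R) (xk ykj : 'cV[R]_n) : Prop :=
  nonpos (gvec g ykj) /\
  (Fobj g0 g phi ykj <= Fobj g0 g phi xk - (alpha / 2 * mnorm (ykj - xk) ^+ 2)%:E)%E.

Record iMBA_run (g0 : 'cV[R]_n -> \bar R) (g : 'I_m -> 'cV[R]_n -> R)
  (phi : 'cV[R]_n -> R)
  (mumin mumax Lmin Lmax Mq betaC betaS alpha tau : R)
  (x xi : nat -> 'cV[R]_n) (V : nat -> 'M[R]_(n, m))
  (mu : nat -> nat -> R) (L : nat -> nat -> 'cV[R]_m) (Q : nat -> nat -> 'M[R]_n)
  (xbar y v : nat -> nat -> 'cV[R]_n) (lam : nat -> nat -> 'cV[R]_m)
  (jk : nat -> nat) : Prop := {
  it_mu : 0 < mumin <= mumax;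
  it_L : 0 < Lmin <= Lmax;
  it_M : 0 < Mq;
  it_betaC : 0 < betaC;
  it_betaS : 0 < betaS;
  it_alpha : 0 < alpha;
  it_tau : 1 < tau;
  it_x0 : nonpos (gvec g (x 0%N));
  it_xi : forall k, lsubdiff (fun z => fine (g0 z)) (x k) (xi k);
  it_V : forall k, lsubdiff_mx g (x k) (V k);
  it_mu0 : forall k, mumin <= mu k 0%N <= mumax;
  it_L0 : forall k i, Lmin <= L k 0%N i 0 <= Lmax;
  it_inner : forall k j, (j <= jk k)%N ->
    let Fk := Fkj (fine (g0 (x k))) (x k) (xi k) (Q k j) phi in
    let Gy := Gfun g (y k j) (x k) (V k) (L k j) in
    [/\ (Q k j)^T = Q k j /\
        (forall d, mu k j * mnorm d ^+ 2 <= dot d (Q k j *m d) <= (mu k j + Mq) * mnorm d ^+ 2),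
        [/\ Sset g (x k) (V k) (L k j) (xbar k j),
            (forall z, Sset g (x k) (V k) (L k j) z -> Fk (xbar k j) <= Fk z) &
            (forall z, Sset g (x k) (V k) (L k j) z ->
               (forall z', Sset g (x k) (V k) (L k j) z' -> Fk z <= Fk z') -> z = xbar k j)],
        lsubdiff phi (y k j) (v k j) /\ (forall i, 0 <= lam k j i 0),
        Fk (y k j) <= Fk (x k) /\
        Num.max (- dot (lam k j) Gy) 0 + infnorm (pospart Gy)
          <= betaC / 2 * mnorm (y k j - x k) ^+ 2 &
        mnorm (xi k + Q k j *m (y k j - x k) + v k j + V k *m lam k j
               + dot (L k j) (lam k j) *: (y k j - x k))
          <= betaS * mnorm (y k j - x k)];
  it_reject : forall k j, (j < jk k)%N ->
    ~ accepted g0 g phi alpha (x k) (y k j) /\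
    (if `[< nonpos (gvec g (y k j)) >]
     then L k j.+1 = L k j /\ mu k j.+1 = tau * mu k j
     else L k j.+1 = tau *: L k j /\ mu k j.+1 = mu k j);
  it_accept : forall k, accepted g0 g phi alpha (x k) (y k (jk k));
  it_next : forall k, x k.+1 = y k (jk k)
}.

End IMBADefs.

(* Main.v *)
Require Import Defs.
From HB Require Import structures.
From mathcomp Require Import all_boot all_order all_algebra.
From mathcomp Require Import boolp classical_sets reals constructive_ereal.
From mathcomp Require Import ring lra zify.
Import Order.TTheory GRing.Theory Num.Theory.
Local Open Scope ring_scope.
Local Open Scope classical_set_scope.
Set Implicit Arguments. Unset Strict Implicit. Unset Printing Implicit Defensive.

Section P1.
Variable R : realType.

Definition mdot p q (A B : 'M[R]_(p, q)) : R := \sum_i \sum_j A i j * B i j.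

Lemma mdotC p q (A B : 'M[R]_(p,q)) : mdot A B = mdot B A.
Proof. by apply: eq_bigr => i _; apply: eq_bigr => j _; rewrite mulrC. Qed.

Lemma mdotDl p q (A B C : 'M[R]_(p,q)) : mdot (A + B) C = mdot A C + mdot B C.
Proof.
rewrite /mdot -big_split; apply: eq_bigr => i _; rewrite -big_split.
by apply: eq_bigr => j _; rewrite mxE mulrDl.
Qed.

Lemma mdotZl p q c (A C : 'M[R]_(p,q)) : mdot (c *: A) C = c * mdot A C.
Proof.
rewrite /mdot mulr_sumr; apply: eq_bigr => i _; rewrite mulr_sumr.
by apply: eq_bigr => j _; rewrite mxE mulrA.
Qed.

Lemma mdotNl p q (A C : 'M[R]_(p,q)) : mdot (- A) C = - mdot A C.
Proof. by rewrite -scaleN1r mdotZl mulN1r. Qed.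

Lemma mdotBl p q (A B C : 'M[R]_(p,q)) : mdot (A - B) C = mdot A C - mdot B C.
Proof. by rewrite mdotDl mdotNl. Qed.

Lemma mdotDr p q (A B C : 'M[R]_(p,q)) : mdot C (A + B) = mdot C A + mdot C B.
Proof. by rewrite mdotC mdotDl !(mdotC C). Qed.
Lemma mdotZr p q c (A C : 'M[R]_(p,q)) : mdot C (c *: A) = c * mdot C A.
Proof. by rewrite mdotC mdotZl mdotC. Qed.
Lemma mdotNr p q (A C : 'M[R]_(p,q)) : mdot C (- A) = - mdot C A.
Proof. by rewrite mdotC mdotNl mdotC. Qed.
Lemma mdotBr p q (A B C : 'M[R]_(p,q)) : mdot C (A - B) = mdot C A - mdot C B.
Proof. by rewrite mdotDr mdotNr. Qed.
Lemma mdot0l p q (A : 'M[R]_(p,q)) : mdot 0 A = 0.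
Proof. by rewrite -(scale0r 0) mdotZl mul0r. Qed.
Lemma mdot0r p q (A : 'M[R]_(p,q)) : mdot A 0 = 0.
Proof. by rewrite mdotC mdot0l. Qed.

Lemma mdot_ge0 p q (A : 'M[R]_(p,q)) : 0 <= mdot A A.
Proof. by apply: sumr_ge0 => i _; apply: sumr_ge0 => j _; rewrite -expr2 sqr_ge0. Qed.

Lemma mnorm_sq p q (A : 'M[R]_(p,q)) : mnorm A ^+ 2 = mdot A A.
Proof.
rewrite /mnorm sqr_sqrtr; last exact: (mdot_ge0 A).
by apply: eq_bigr => i _; apply: eq_bigr => j _; rewrite expr2.
Qed.

Lemma mnorm_ge0 p q (A : 'M[R]_(p,q)) : 0 <= mnorm A.
Proof. exact: sqrtr_ge0. Qed.

Lemma mnormE p q (A : 'M[R]_(p,q)) : mnorm A = Num.sqrt (mdot A A).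
Proof. by rewrite -mnorm_sq sqrtr_sqr ger0_norm ?mnorm_ge0. Qed.

Lemma mnorm_le p q (A : 'M[R]_(p,q)) c : 0 <= c -> mdot A A <= c ^+ 2 -> mnorm A <= c.
Proof.
move=> c0 h; rewrite mnormE -(ger0_norm c0) -sqrtr_sqr.
exact: ler_wsqrtr.
Qed.

Lemma mnorm_eq0 p q (A : 'M[R]_(p,q)) : mnorm A = 0 -> A = 0.
Proof.
move=> h; have: mdot A A = 0 by rewrite -mnorm_sq h expr0n.
move=> /eqP; rewrite psumr_eq0; last first.
  by move=> i _; apply: sumr_ge0 => j _; rewrite -expr2 sqr_ge0.
move=> /allP hi; apply/matrixP => i j; rewrite mxE.
have := hi i (mem_index_enum _); rewrite psumr_eq0; last first.
  by move=> k _; rewrite -expr2 sqr_ge0.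
move=> /allP /(_ j (mem_index_enum _)); rewrite -expr2 sqrf_eq0.
by move/eqP.
Qed.

Lemma dotE p (a b : 'cV[R]_p) : dot a b = mdot a b.
Proof. by apply: eq_bigr => i _; rewrite big_ord1. Qed.

Lemma CS p q (A B : 'M[R]_(p,q)) : mdot A B <= mnorm A * mnorm B.
Proof.
set a := mnorm A; set b := mnorm B.
have a0 : 0 <= a := mnorm_ge0 A; have b0 : 0 <= b := mnorm_ge0 B.
have [a00|ap] := eqVneq a 0.
  by rewrite (mnorm_eq0 a00) mdot0l a00 mul0r.
have [b00|bp] := eqVneq b 0.
  by rewrite (mnorm_eq0 b00) mdot0r b00 mulr0.
have ab : 0 < a * b by rewrite mulr_gt0 // lt0r ?ap ?bp.
have := mdot_ge0 (b *: A - a *: B).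
rewrite !(mdotBl, mdotBr, mdotZl, mdotZr) -!mnorm_sq -/a -/b (mdotC B A).
move=> h.
have : 0 <= (a * b) * (a * b - mdot A B) by nra.
by rewrite pmulr_rge0 // subr_ge0.
Qed.

Lemma mnormZ p q c (A : 'M[R]_(p,q)) : mnorm (c *: A) = `|c| * mnorm A.
Proof.
rewrite !mnormE mdotZl mdotZr mulrA -expr2 sqrtrM ?sqr_ge0 //.
by rewrite sqrtr_sqr.
Qed.

Lemma mnormN p q (A : 'M[R]_(p,q)) : mnorm (- A) = mnorm A.
Proof. by rewrite -scaleN1r mnormZ normrN normr1 mul1r. Qed.

Lemma mnormB p q (A B : 'M[R]_(p,q)) : mnorm (A - B) = mnorm (B - A).
Proof. by rewrite -mnormN opprB. Qed.

Lemma CSabs p q (A B : 'M[R]_(p,q)) : `|mdot A B| <= mnorm A * mnorm B.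
Proof.
rewrite ler_norml CS andbT lerNl -mdotNl.
by apply: le_trans (CS _ _) _; rewrite mnormN.
Qed.

Lemma mnormD p q (A B : 'M[R]_(p,q)) : mnorm (A + B) <= mnorm A + mnorm B.
Proof.
apply: mnorm_le; first by rewrite addr_ge0 ?mnorm_ge0.
rewrite mdotDl !mdotDr (mdotC B A) -!mnorm_sq.
have := CS A B; nra.
Qed.

Lemma mnorm0 p q : mnorm (0 : 'M[R]_(p,q)) = 0.
Proof. by rewrite mnormE mdot0l sqrtr0. Qed.

Lemma mnorm_tri p q (A B C : 'M[R]_(p,q)) : mnorm (A - C) <= mnorm (A - B) + mnorm (B - C).
Proof. by apply: le_trans (mnormD _ _); rewrite addrA subrK. Qed.

Lemma mnormDB p q (A B : 'M[R]_(p,q)) : mnorm A <= mnorm B + mnorm (A - B).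
Proof. by apply: le_trans (mnormD _ _); rewrite addrC subrK. Qed.

Lemma entry_le p q (A : 'M[R]_(p,q)) i j : `|A i j| <= mnorm A.
Proof.
rewrite -(ger0_norm (mnorm_ge0 A)) -ler_sqr ?nnegrE ?normr_ge0 //.
rewrite !real_normK ?num_real // mnorm_sq.
rewrite /mdot (bigD1 i) //= (bigD1 j) //= -expr2 -addrA lerDl.
apply: addr_ge0; first by apply: sumr_ge0 => k _; rewrite -expr2 sqr_ge0.
by apply: sumr_ge0 => k _; apply: sumr_ge0 => l _; rewrite -expr2 sqr_ge0.
Qed.

End P1.

Section P2.
Variable R : realType.

Lemma scalarCS r (a b : 'I_r -> R) :
  (\sum_k a k * b k) ^+ 2 <= (\sum_k a k ^+ 2) * (\sum_k b k ^+ 2).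
Proof.
pose A : 'cV[R]_r := \col_k a k. pose B : 'cV[R]_r := \col_k b k.
have E : forall (u w : 'cV[R]_r), mdot u w = \sum_k u k 0 * w k 0.
  by move=> u w; apply: eq_bigr => k _; rewrite big_ord1.
have h := CSabs A B.
have : `|mdot A B| ^+ 2 <= (mnorm A * mnorm B) ^+ 2.
  by rewrite ler_sqr ?nnegrE ?normr_ge0 ?mulr_ge0 ?mnorm_ge0.
rewrite real_normK ?num_real // exprMn !mnorm_sq !E.
have -> : \sum_k A k 0 * B k 0 = \sum_k a k * b k by apply: eq_bigr => k _; rewrite !mxE.
have -> : \sum_k A k 0 * A k 0 = \sum_k a k ^+ 2 by apply: eq_bigr => k _; rewrite !mxE expr2.
have -> : \sum_k B k 0 * B k 0 = \sum_k b k ^+ 2 by apply: eq_bigr => k _; rewrite !mxE expr2.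
by [].
Qed.

Lemma mnorm_mulmx p q r (A : 'M[R]_(p,q)) (B : 'M[R]_(q,r)) :
  mnorm (A *m B) <= mnorm A * mnorm B.
Proof.
apply: mnorm_le; first by rewrite mulr_ge0 ?mnorm_ge0.
rewrite exprMn !mnorm_sq.
apply: (@le_trans _ _ (\sum_i \sum_j ((\sum_k A i k ^+ 2) * (\sum_k B k j ^+ 2)))).
  apply: ler_sum => i _; apply: ler_sum => j _; rewrite mxE -expr2.
  exact: scalarCS.
rewrite /mdot mulr_suml; apply: ler_sum => i _.
rewrite -mulr_sumr le_eqVlt; apply/orP; left; apply/eqP; congr (_ * _).
rewrite exchange_big /=.
by apply: eq_bigr => j _; apply: eq_bigr => k _; rewrite expr2.
Qed.

Lemma mnorm_tr p q (A : 'M[R]_(p,q)) : mnorm A^T = mnorm A.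
Proof.
rewrite !mnormE /mdot exchange_big /=; congr Num.sqrt.
by apply: eq_bigr => i _; apply: eq_bigr => j _; rewrite !mxE.
Qed.

Lemma dot_sq p (a : 'cV[R]_p) : dot a a = mnorm a ^+ 2.
Proof. by rewrite dotE mnorm_sq. Qed.

Lemma dotC p (a b : 'cV[R]_p) : dot a b = dot b a.
Proof. by rewrite !dotE mdotC. Qed.

Lemma dotCS p (a b : 'cV[R]_p) : dot a b <= mnorm a * mnorm b.
Proof. by rewrite dotE CS. Qed.

Lemma dotCSabs p (a b : 'cV[R]_p) : `|dot a b| <= mnorm a * mnorm b.
Proof. by rewrite dotE CSabs. Qed.

Lemma dotDl p (a b c : 'cV[R]_p) : dot (a + b) c = dot a c + dot b c.
Proof. by rewrite !dotE mdotDl. Qed.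
Lemma dotDr p (a b c : 'cV[R]_p) : dot c (a + b) = dot c a + dot c b.
Proof. by rewrite !dotE mdotDr. Qed.
Lemma dotBl p (a b c : 'cV[R]_p) : dot (a - b) c = dot a c - dot b c.
Proof. by rewrite !dotE mdotBl. Qed.
Lemma dotBr p (a b c : 'cV[R]_p) : dot c (a - b) = dot c a - dot c b.
Proof. by rewrite !dotE mdotBr. Qed.
Lemma dotNl p (a c : 'cV[R]_p) : dot (- a) c = - dot a c.
Proof. by rewrite !dotE mdotNl. Qed.
Lemma dotNr p (a c : 'cV[R]_p) : dot c (- a) = - dot c a.
Proof. by rewrite !dotE mdotNr. Qed.
Lemma dotZl p k (a c : 'cV[R]_p) : dot (k *: a) c = k * dot a c.
Proof. by rewrite !dotE mdotZl. Qed.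
Lemma dotZr p k (a c : 'cV[R]_p) : dot c (k *: a) = k * dot c a.
Proof. by rewrite !dotE mdotZr. Qed.
Lemma dot0l p (a : 'cV[R]_p) : dot 0 a = 0.
Proof. by rewrite dotE mdot0l. Qed.
Lemma dot0r p (a : 'cV[R]_p) : dot a 0 = 0.
Proof. by rewrite dotE mdot0r. Qed.

Lemma dot_mulmx p q (a : 'cV[R]_p) (A : 'M[R]_(p,q)) (b : 'cV[R]_q) :
  dot a (A *m b) = dot (A^T *m a) b.
Proof.
rewrite /dot.
under eq_bigr do rewrite mxE mulr_sumr.
rewrite exchange_big /=; apply: eq_bigr => j _.
rewrite mxE mulr_suml; apply: eq_bigr => i _; rewrite !mxE; ring.
Qed.

Lemma sqnorm_expand p (a b : 'cV[R]_p) :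
  mnorm (a + b) ^+ 2 = mnorm a ^+ 2 + 2 * dot a b + mnorm b ^+ 2.
Proof.
rewrite -!dot_sq dotDl !dotDr (dotC b a); ring.
Qed.

Lemma sqnorm_expandB p (a b : 'cV[R]_p) :
  mnorm (a - b) ^+ 2 = mnorm a ^+ 2 - 2 * dot a b + mnorm b ^+ 2.
Proof. by rewrite sqnorm_expand dotNr mnormN; ring. Qed.

Lemma sqnorm_convex p (a b : 'cV[R]_p) t :
  mnorm (t *: a + (1 - t) *: b) ^+ 2 =
  t * mnorm a ^+ 2 + (1 - t) * mnorm b ^+ 2 - t * (1 - t) * mnorm (a - b) ^+ 2.
Proof.
rewrite sqnorm_expandB sqnorm_expand !mnormZ dotZl dotZr !exprMn !real_normK ?num_real //.
ring.
Qed.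

End P2.

Section P3.
Variable R : realType.

Definition incr (s : nat -> nat) := forall k, (s k < s k.+1)%N.

Lemma incr_ge s : incr s -> forall k, (k <= s k)%N.
Proof. move=> h; elim=> [|k IH] //; exact: leq_ltn_trans IH (h k). Qed.

Lemma incr_mono s : incr s -> forall i j, (i <= j)%N -> (s i <= s j)%N.
Proof.
move=> h i j /subnKC <-; elim: (j - i)%N => [|d IH]; first by rewrite addn0.
by rewrite addnS; apply: leq_trans IH (ltnW (h _)).
Qed.

Lemma incr_comp s t : incr s -> incr t -> incr (s \o t).
Proof. move=> hs ht k /=; apply: (leq_trans (hs _)); exact: incr_mono (ht k). Qed.

Lemma archi_inv (e : R) : 0 < e -> exists N : nat, N.+1%:R^-1 < e.
Proof. by move=> /(ltr_add_invr) [k]; rewrite add0r => h; exists k. Qed.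

Lemma cluster_real (u : nat -> R) C : (forall j, `|u j| <= C) ->
  exists c, forall eps, 0 < eps -> forall N, exists2 j, (N <= j)%N & `|u j - c| < eps.
Proof.
move=> hC.
pose S := [set y : R | forall N, exists2 j, (N <= j)%N & y <= u j].
have S0 : S (- C) by move=> N; exists N => //; have := hC N; rewrite ler_norml => /andP[].
have hs : has_sup S.
  split; first by exists (-C).
  exists C => y Sy; have [j _ hj] := Sy 0%N; apply: le_trans hj _.
  by have := hC j; rewrite ler_norml => /andP[].
exists (sup S) => eps e0 N.
have e2 : 0 < eps / 2 by rewrite divr_gt0.
have [y Sy hy] := sup_adherent e2 hs.
have nS : ~ S (sup S + eps / 2).
  move=> /(sup_upper_bound hs) /= h; lra.
have [N0 hN0] : exists N0, forall j, (N0 <= j)%N -> u j < sup S + eps / 2.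
  apply: contrapT => hn; apply: nS => N1.
  move/forallNP: hn => /(_ N1) /existsNP [j /not_implyP [hj hlt]].
  by exists j => //; rewrite leNgt; apply/negP.
have [j hj hyj] := Sy (maxn N N0).
exists j; first by apply: leq_trans hj; rewrite leq_maxl.
have := hN0 j (leq_trans (leq_maxr _ _) hj).
rewrite ltr_norml; move=> h1; apply/andP; split; last by lra.
by lra.
Qed.

Lemma bw_real (u : nat -> R) C : (forall j, `|u j| <= C) ->
  exists s, incr s /\ exists l, r_cvg (u \o s) l.
Proof.
move=> /cluster_real [c hc].
have hp : forall Nk : nat * nat, exists j, (Nk.1 <= j)%N /\ `|u j - c| < Nk.2.+1%:R^-1.
  move=> [N k]; have hk : 0 < k.+1%:R^-1 :> R by rewrite invr_gt0 ltr0Sn.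
  by have [j ? ?] := hc _ hk N; exists j.
have [f hf] := choice hp.
pose s := fix s k := if k is k'.+1 then f ((s k').+1, k) else f (0%N, 0%N).
exists s; split.
  by move=> k /=; have [h _] := hf ((s k).+1, k.+1).
exists c => eps e0; have [N hN] := archi_inv e0.
exists N => k hk /=.
have hk' : `|u (s k) - c| < k.+1%:R^-1.
  by case: k {hk} => [|k] /=; [case: (hf (0,0)%N)|case: (hf ((s k).+1, k.+1))].
apply: lt_le_trans hk' _; apply: le_trans (ltW hN).
by rewrite lef_pV2 ?posrE ?ltr0Sn // ler_nat ltnS.
Qed.

Lemma r_cvg_sub (u : nat -> R) l s : incr s -> r_cvg u l -> r_cvg (u \o s) l.
Proof.
move=> hs h eps e0; have [N hN] := h eps e0; exists N => k hk.
by apply: hN; apply: leq_trans hk (incr_ge hs k).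
Qed.

Lemma bw_list (T : eqType) (st : seq T) (f : T -> nat -> R) C :
  (forall t k, `|f t k| <= C) ->
  exists s, incr s /\ forall t, t \in st -> exists l, r_cvg (f t \o s) l.
Proof.
move=> hC; elim: st => [|t st [s [hs IH]]].
  by exists id; split.
have [s' [hs' [l hl]]] := bw_real (fun k => hC t (s k)).
exists (s \o s'); split; first exact: incr_comp.
move=> t'; rewrite in_cons => /orP [/eqP -> | ht']; first by exists l.
have [l' hl'] := IH t' ht'; exists l'.
exact: (r_cvg_sub (u := f t' \o s)).
Qed.

Lemma mnorm_entries p q (A : 'M[R]_(p,q)) e : 0 <= e ->
  (forall i j, `|A i j| <= e) -> mnorm A <= (p * q)%:R * e.
Proof.
move=> e0 h; apply: mnorm_le; first by rewrite mulr_ge0 ?ler0n.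
apply: (@le_trans _ _ (\sum_(i < p) \sum_(j < q) e ^+ 2)).
  apply: ler_sum => i _; apply: ler_sum => j _; rewrite -expr2.
  rewrite -real_normK ?num_real //; rewrite ler_sqr ?nnegrE ?normr_ge0 //.
rewrite !sumr_const !card_ord -mulrnA -[e ^+ 2 *+ _]mulr_natl exprMn -natrX.
apply: ler_wpM2r; first by rewrite sqr_ge0.
rewrite ler_nat; nia.
Qed.

Lemma bw_mx p q (zs : nat -> 'M[R]_(p,q)) C : (forall k, mnorm (zs k) <= C) ->
  exists s, incr s /\ exists z, mx_cvg (zs \o s) z.
Proof.
move=> hC.
have hC' : forall (t : 'I_p * 'I_q) k, `|zs k t.1 t.2| <= C.
  by move=> t k; apply: le_trans (entry_le _ _ _) (hC k).
have [s [hs hl]] := bw_list (enum {: 'I_p * 'I_q}) hC'.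
have hl' : forall t : 'I_p * 'I_q, exists l, r_cvg ((fun k => zs k t.1 t.2) \o s) l.
  by move=> t; apply: hl; rewrite mem_enum.
have [lf hlf] := choice hl'.
exists s; split => //; exists (\matrix_(i, j) lf (i, j)) => eps e0.
pose e' := eps / ((p * q)%:R + 1).
have pq0 : 0 < (p * q)%:R + 1 :> R by rewrite ltr_wpDl ?ler0n.
have e'0 : 0 < e' by rewrite divr_gt0.
have hN : forall t : 'I_p * 'I_q, exists N, forall k, (N <= k)%N -> `|zs (s k) t.1 t.2 - lf t| < e'.
  by move=> t; apply: hlf.
have [Nf hNf] := choice hN.
exists (\max_(t : 'I_p * 'I_q) Nf t) => k hk /=.
apply: le_lt_trans (mnorm_entries (ltW e'0) _) _.
  move=> i j; rewrite !mxE; apply: ltW; apply: (hNf (i, j)).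
  by apply: leq_trans hk; apply: (leq_bigmax_cond (i, j)).
rewrite /e' mulrA ltr_pdivrMr // mulrDr mulr1 mulrC ltrDl //.
Qed.

Lemma mx_cvg_sub p q (u : nat -> 'M[R]_(p,q)) l s : incr s -> mx_cvg u l -> mx_cvg (u \o s) l.
Proof.
move=> hs h eps e0; have [N hN] := h eps e0; exists N => k hk.
by apply: hN; apply: leq_trans hk (incr_ge hs k).
Qed.

End P3.

Section P4.
Variable R : realType.

Lemma unif p q (A : set 'M[R]_(p,q)) C (P : R -> 'M[R]_(p,q) -> Prop) :
  (forall z, A z -> mnorm z <= C) ->
  (forall zs z, (forall j, A (zs j)) -> mx_cvg zs z -> A z) ->
  (forall z, A z -> exists e, 0 < e /\ exists r, 0 < r /\
     forall w, A w -> mnorm (w - z) < r -> P e w) ->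
  (forall e e' w, 0 < e' -> e' <= e -> P e w -> P e' w) ->
  exists e, 0 < e /\ forall w, A w -> P e w.
Proof.
move=> hb hcl hloc hmon; apply: contrapT => hn.
have hj : forall j : nat, exists w, A w /\ ~ P j.+1%:R^-1 w.
  move=> j; apply: contrapT => hj; apply: hn; exists j.+1%:R^-1; split.
    by rewrite invr_gt0 ltr0Sn.
  move=> w Aw; apply: contrapT => hP; apply: hj; by exists w.
have [zs hzs] := choice hj.
have [s [hs [z hz]]] := bw_mx (fun k => hb _ (proj1 (hzs k))).
have Az : A z by apply: (hcl _ _ _ hz) => j; exact: (proj1 (hzs _)).
have [e [e0 [r [r0 hr]]]] := hloc z Az.
have [N1 hN1] := archi_inv e0.
have [N2 hN2] := hz r r0.
set k := maxn N1 N2.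
have hk := hN2 k (leq_maxr _ _).
have Pk := hr _ (proj1 (hzs (s k))) hk.
apply: (proj2 (hzs (s k))); apply: hmon Pk; first by rewrite invr_gt0 ltr0Sn.
apply: le_trans (ltW hN1); rewrite lef_pV2 ?posrE ?ltr0Sn // ler_nat ltnS.
apply: leq_trans (incr_ge hs k); exact: leq_maxl.
Qed.

Lemma fin_pos (m : nat) (P : 'I_m -> R -> Prop) :
  (forall i, exists e, 0 < e /\ P i e) ->
  (forall i e e', 0 < e' -> e' <= e -> P i e -> P i e') ->
  exists e, 0 < e /\ forall i, P i e.
Proof.
move=> h hmon; have [f hf] := choice h.
have S0 : 0 <= \sum_i (f i)^-1 by apply: sumr_ge0 => i _; rewrite invr_ge0 ltW // (proj1 (hf i)).
exists (1 + \sum_i (f i)^-1)^-1; split; first by rewrite invr_gt0; lra.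
move=> i; apply: (hmon i (f i)); first by rewrite invr_gt0; lra.
  have fi := proj1 (hf i).
  rewrite -[f i]invrK lef_pV2 ?posrE ?invr_gt0 //; last by lra.
  rewrite (bigD1 i) //=.
  have : 0 <= \sum_(j | j != i) (f j)^-1.
    by apply: sumr_ge0 => j _; rewrite invr_ge0 ltW // (proj1 (hf j)).
  lra.
exact: (proj2 (hf i)).
Qed.

End P4.

Section P5.
Variable R : realType.
Variable n : nat.
Implicit Types (f : 'cV[R]_n -> R).

Lemma le_eps (a b : R) : (forall e, 0 < e -> a <= b + e) -> a <= b.
Proof. by move=> h; apply/ler_addgt0Pr => e e0; apply: h. Qed.

Lemma mnorm_scale_unit (u : 'cV[R]_n) t : u != 0 -> 0 <= t ->
  mnorm ((t / mnorm u) *: u) = t.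
Proof.
move=> u0 t0; have hu : 0 < mnorm u.
  rewrite lt0r mnorm_ge0 andbT; apply/eqP => h; move/eqP: u0; apply; exact: mnorm_eq0.
rewrite mnormZ ger0_norm ?divr_ge0 ?mnorm_ge0 // divfK //; exact: lt0r_neq0.
Qed.

Lemma rsub_bound f z u c r : 0 < r -> 0 <= c ->
  (forall y y', mnorm (y - z) < r -> mnorm (y' - z) < r -> `|f y - f y'| <= c * mnorm (y - y')) ->
  rsubdiff f z u -> mnorm u <= c.
Proof.
move=> r0 c0 hL hs; have [->|u0] := eqVneq u 0; first by rewrite mnorm0.
have hu : 0 < mnorm u.
  rewrite lt0r mnorm_ge0 andbT; apply/eqP => h; move/eqP: u0; apply; exact: mnorm_eq0.
apply: le_eps => eps e0.
have [d d0 hd] := hs eps e0.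
have hm1 : Num.min d r <= d by rewrite ge_min lexx.
have hm2 : Num.min d r <= r by rewrite ge_min lexx orbT.
have hm0 : 0 < Num.min d r by rewrite lt_min d0 r0.
set t := Num.min d r / 2.
have t0 : 0 < t by rewrite divr_gt0.
have td : t < d by rewrite /t; lra.
have tr : t < r by rewrite /t; lra.
set y := z + (t / mnorm u) *: u.
have hy : mnorm (y - z) = t by rewrite /y addrC addKr mnorm_scale_unit // ltW.
have h1 := hd y ltac:(by rewrite hy).
have h2 := hL y z ltac:(by rewrite hy) ltac:(by rewrite subrr mnorm0).
have hdot : dot u (y - z) = t * mnorm u.
  rewrite /y addrC addKr dotZr dot_sq /= expr2; field; exact: lt0r_neq0.
rewrite hdot hy in h1; rewrite hy in h2.
have h3 : f y - f z <= c * t by apply: le_trans (ler_norm _) h2.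
have : t * mnorm u <= t * (c + eps) by nra.
by rewrite ler_pM2l.
Qed.

Lemma lsub_bound f x w c r : 0 < r -> 0 <= c ->
  (forall y y', mnorm (y - x) < r -> mnorm (y' - x) < r -> `|f y - f y'| <= c * mnorm (y - y')) ->
  lsubdiff f x w -> mnorm w <= c.
Proof.
move=> r0 c0 hL [xs [ws [hx _ hr hw]]].
apply: le_eps => eps e0.
have r2 : 0 < r / 2 by rewrite divr_gt0.
have [N1 hN1] := hx _ r2; have [N2 hN2] := hw _ e0.
set k := maxn N1 N2.
have hk1 := hN1 k (leq_maxl _ _); have hk2 := hN2 k (leq_maxr _ _).
have hb : mnorm (ws k) <= c.
  apply: (rsub_bound r2 c0) (hr k) => y y' hy hy'.
  apply: hL.
    by apply: le_lt_trans (mnorm_tri y (xs k) x) _; lra.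
  by apply: le_lt_trans (mnorm_tri y' (xs k) x) _; lra.
have := mnormDB w (ws k); rewrite mnormB; lra.
Qed.


Definition conc f x e rho := forall y z t, mnorm (y - x) < e -> mnorm (z - x) < e ->
  0 <= t <= 1 ->
  let h w := f w - rho / 2 * mnorm w ^+ 2 in
  t * h y + (1 - t) * h z <= h (t *: y + (1 - t) *: z).

Lemma rsub_uc2 f x e rho z u : 0 < e -> 0 <= rho -> conc f x e rho ->
  mnorm (z - x) < e / 2 -> rsubdiff f z u ->
  forall y, mnorm (y - x) < e / 2 ->
  f y <= f z + dot u (y - z) + rho / 2 * mnorm (y - z) ^+ 2.
Proof.
move=> e0 rho0 hc hz hs y hy.
set d := y - z; set D := mnorm d.
have D0 : 0 <= D := mnorm_ge0 d.
suff H : forall eta, 0 < eta -> f y <= f z + dot u d + rho / 2 * D ^+ 2 + eta * D.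
  apply: le_eps => eps ep0; have := H (eps / (D + 1)) ltac:(by rewrite divr_gt0 //; lra).
  move=> h; apply: le_trans h _; rewrite lerD2l.
  have hD1 : D / (D + 1) <= 1 by rewrite ler_pdivrMr; lra.
  rewrite -mulrA (mulrC _ D); apply: ler_piMr; lra.
move=> eta eta0.
have [dl dl0 hdl] := hs (eta / 2) ltac:(by rewrite divr_gt0).
set m := Num.min (Num.min dl (e / 2)) (eta / (rho + 1)).
have m1 : m <= dl by rewrite /m !ge_min lexx.
have m2 : m <= e / 2 by rewrite /m !ge_min lexx orbT.
have m3 : m <= eta / (rho + 1) by rewrite /m !ge_min lexx orbT.
have m0 : 0 < m by rewrite /m !lt_min dl0 divr_gt0 //= divr_gt0 //; lra.
set sg := m / (2 * (D + 1)).
have sg0 : 0 < sg by rewrite divr_gt0 //; lra.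
have hsg : 2 * (sg * D) + 2 * sg = m by rewrite /sg; field; lra.
have hsD : sg * D < dl by nra.
have hsD2 : sg * D < e / 2 by nra.
have hrho : rho * (sg * D) <= eta / 2.
  have : m * (rho + 1) <= eta by rewrite -ler_pdivlMr //; lra.
  have : sg * D <= m / 2 by lra.
  nra.
set w := z - sg *: d.
have hwz : mnorm (w - z) = sg * D by rewrite /w addrC addKr mnormN mnormZ ger0_norm // ltW.
have hwx : mnorm (w - x) < e.
  apply: le_lt_trans (mnorm_tri w z x) _; rewrite hwz; lra.
have hyx : mnorm (y - x) < e by lra.
have hv := hdl w ltac:(by rewrite hwz).
have hdu : dot u (w - z) = - (sg * dot u d).
  by rewrite /w addrC addKr dotNr dotZr.
rewrite hdu hwz in hv.
set t := sg / (1 + sg).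
have t01 : 0 <= t <= 1.
  apply/andP; split; first by rewrite divr_ge0 //; lra.
  by rewrite ler_pdivrMr; lra.
have hcv := hc y w t hyx hwx t01; rewrite /= in hcv.
have hz' : t *: y + (1 - t) *: w = z.
  have gen : forall a b : R, sg / (1 + sg) * a + (1 - sg / (1 + sg)) * (b - sg * (a - b)) = b.
    move=> a b; have h1 : 1 + sg != 0 by rewrite lt0r_neq0 //; lra.
    by clear -h1; field.
  by apply/matrixP => i j; rewrite /w /d /t !mxE gen.
rewrite hz' in hcv.
have Nw : mnorm w ^+ 2 = mnorm z ^+ 2 - 2 * sg * dot z d + sg ^+ 2 * D ^+ 2.
  rewrite /w sqnorm_expandB dotZr mnormZ exprMn real_normK ?num_real //; rewrite -/D; ring.
have Ny : mnorm y ^+ 2 = mnorm z ^+ 2 + 2 * dot z d + D ^+ 2.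
  have -> : y = z + d by rewrite /d addrC subrK.
  by rewrite sqnorm_expand.
rewrite Nw Ny in hcv.
have hcv2 : sg * (f y - rho / 2 * (mnorm z ^+ 2 + 2 * dot z d + D ^+ 2)) +
   (f w - rho / 2 * (mnorm z ^+ 2 - 2 * sg * dot z d + sg ^+ 2 * D ^+ 2)) <=
   (1 + sg) * (f z - rho / 2 * mnorm z ^+ 2).
  have e1 : 0 < 1 + sg by lra.
  have := hcv; rewrite /t.
  set A := f y - _; set B := f w - _; set Cz := f z - _.
  move=> hh; have : (1 + sg) * (sg / (1 + sg) * A + (1 - sg / (1 + sg)) * B) <= (1 + sg) * Cz.
    by rewrite ler_pM2l.
  have -> : (1 + sg) * (sg / (1 + sg) * A + (1 - sg / (1 + sg)) * B) = sg * A + B.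
    by field; lra.
  by [].
have key : sg * f y <= sg * (f z + dot u d + rho / 2 * D ^+ 2 + eta * D).
  have : rho / 2 * (sg ^+ 2 * D ^+ 2) <= eta / 4 * (sg * D).
    have : 0 <= sg * D by rewrite mulr_ge0 // ltW.
    nra.
  nra.
by rewrite ler_pM2l in key.
Qed.

Lemma lsub_uc2 f x e rho xi : 0 < e -> 0 <= rho -> conc f x e rho ->
  lsubdiff f x xi -> forall y, mnorm (y - x) < e / 2 ->
  f y <= f x + dot xi (y - x) + rho / 2 * mnorm (y - x) ^+ 2.
Proof.
move=> e0 rho0 hc [xs [ws [hx hfx hr hw]]] y hy.
set d := y - x; set D := mnorm d; set X := mnorm xi.
have D0 : 0 <= D := mnorm_ge0 _; have X0 : 0 <= X := mnorm_ge0 _.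
apply: le_eps => eps ep0.
set K := 3 + D + X + rho * D + rho.
have K0 : 0 < K by have := mulr_ge0 rho0 D0; rewrite /K; lra.
set eta := Num.min 1 (eps / K).
have et1 : eta <= 1 by rewrite /eta ge_min lexx.
have et2 : eta <= eps / K by rewrite /eta ge_min lexx orbT.
have et0 : 0 < eta by rewrite /eta lt_min ltr01 divr_gt0.
have etK : eta * K <= eps by rewrite -ler_pdivlMr.
set eta' := Num.min eta (e / 2).
have et'0 : 0 < eta' by rewrite /eta' lt_min et0 divr_gt0.
have et'1 : eta' <= eta by rewrite /eta' ge_min lexx.
have et'2 : eta' <= e / 2 by rewrite /eta' ge_min lexx orbT.
have [N1 h1] := hx _ et'0; have [N2 h2] := hfx _ et0; have [N3 h3] := hw _ et0.
set k := maxn N1 (maxn N2 N3).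
have k1 : (N1 <= k)%N by rewrite leq_maxl.
have k2 : (N2 <= k)%N by rewrite /k (leq_trans _ (leq_maxr _ _)) // leq_maxl.
have k3 : (N3 <= k)%N by rewrite /k (leq_trans _ (leq_maxr _ _)) // leq_maxr.
have ha := h1 k k1; have hb := h3 k k3; have hf := h2 k k2; rewrite /= in hf.
have hz : mnorm (xs k - x) < e / 2 by lra.
have key := rsub_uc2 e0 rho0 hc hz (hr k) hy.
set a := xs k - x in ha hz; set b := ws k - xi in hb.
have eyz : y - xs k = d - a by rewrite /d /a opprB addrA subrK.
have eu : ws k = xi + b by rewrite /b addrC subrK.
rewrite eyz eu in key.
have A0 : 0 <= mnorm a := mnorm_ge0 _; have B0 : 0 <= mnorm b := mnorm_ge0 _.
have E1 : dot (xi + b) (d - a) = dot xi d - dot xi a + dot b d - dot b a.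
  by rewrite dotDl !dotBr; ring.
have E2 : mnorm (d - a) ^+ 2 = D ^+ 2 - 2 * dot d a + mnorm a ^+ 2 by rewrite sqnorm_expandB.
rewrite E1 E2 in key.
have c1 := dotCSabs xi a; have c2 := dotCSabs b d; have c3 := dotCSabs b a; have c4 := dotCSabs d a.
rewrite -/X in c1; rewrite -/D in c2 c4.
have hfx' : f (xs k) <= f x + eta by move: hf; rewrite ltr_norml; lra.
have i1 : X * mnorm a <= X * eta by apply: ler_wpM2l => //; lra.
have i2 : mnorm b * D <= eta * D by apply: ler_wpM2r => //; lra.
have i3 : mnorm b * mnorm a <= eta by nra.
have i4 : D * mnorm a <= D * eta by apply: ler_wpM2l => //; lra.
have i5 : mnorm a ^+ 2 <= eta by rewrite expr2; nra.
have j1 : rho / 2 * (- 2 * dot d a) <= rho * (D * eta).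
  have : - dot d a <= D * eta by move: c4; rewrite ler_norml; lra.
  have r2 : 0 <= rho by [].
  nra.
have j2 : rho / 2 * mnorm a ^+ 2 <= rho * eta by nra.
have hK : eta * K = 3 * eta + eta * D + eta * X + rho * (D * eta) + rho * eta.
  by rewrite /K; ring.
move: c1 c2 c3; rewrite !ler_norml => /andP[c1a c1b] /andP[c2a c2b] /andP[c3a c3b].
have : f y <= f x + dot xi d + rho / 2 * D ^+ 2 + eta * K.
  rewrite hK; nra.
lra.
Qed.

End P5.

Section P6.
Variable R : realType.
Variable n : nat.

Definition supp k (d : 'cV[R]_n) := forall i : 'I_n, (k <= i)%N -> d i 0 = 0.

Lemma dot_delta (a : 'cV[R]_n) i : dot a (delta_mx i 0) = a i 0.
Proof.
rewrite /dot (bigD1 i) //= big1 ?addr0; first by rewrite mxE !eqxx mulr1.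
by move=> j hj; rewrite mxE (negbTE hj) mulr0.
Qed.

Lemma hb_step k (p : 'cV[R]_n -> R) (hk : (k < n)%N) : convex_fun p ->
  forall c : 'cV[R]_n, (forall d, supp k d -> dot c d <= p d) ->
  exists c', forall d, supp k.+1 d -> dot c' d <= p d.
Proof.
move=> hcv c hc.
pose ik : 'I_n := Ordinal hk.
pose e : 'cV[R]_n := delta_mx ik 0.
have dce : forall a, dot a e = a ik 0 by move=> a; apply: dot_delta.
have dec : forall a, dot e a = a ik 0 by move=> a; rewrite dotC dce.
have key : forall u v s t, supp k u -> supp k v -> 0 < s -> 0 < t ->
    t * dot c u + s * dot c v <= t * p (u - s *: e) + s * p (v + t *: e).
  move=> u v s t hu hv s0 t0.
  have st : 0 < s + t by lra.
  set lm := t / (s + t).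
  have lm01 : 0 <= lm <= 1.
    by apply/andP; split; [rewrite divr_ge0 //; lra | rewrite ler_pdivrMr //; lra].
  have hc1 := hcv (u - s *: e) (v + t *: e) lm lm01.
  set w := (s + t)^-1 *: (t *: u + s *: v).
  have ew : lm *: (u - s *: e) + (1 - lm) *: (v + t *: e) = w.
    have gen : forall a b q : R, lm * (a - s * q) + (1 - lm) * (b + t * q) = (s + t)^-1 * (t * a + s * b).
      move=> a b q; rewrite /lm; have h1 : s + t != 0 by rewrite lt0r_neq0.
      by clear -h1; field.
    by apply/matrixP => i j; rewrite !mxE gen.
  rewrite ew in hc1.
  have sw : supp k w by move=> i hi; rewrite !mxE hu // hv // !mulr0 addr0 mulr0.
  have hc2 := hc w sw.
  have dw : dot c w = (s + t)^-1 * (t * dot c u + s * dot c v).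
    by rewrite dotZr dotDr !dotZr.
  rewrite dw in hc2.
  have h3 : (s + t)^-1 * (t * dot c u + s * dot c v) <= lm * p (u - s *: e) + (1 - lm) * p (v + t *: e).
    exact: le_trans hc2 hc1.
  have h4 : t * dot c u + s * dot c v <= (s + t) * (lm * p (u - s *: e) + (1 - lm) * p (v + t *: e)).
    by rewrite -ler_pdivrMl //.
  apply: le_trans h4 _; rewrite le_eqVlt; apply/orP; left; apply/eqP.
  rewrite /lm; have h1 : s + t != 0 by rewrite lt0r_neq0.
  by clear -h1; field.
pose Lo := [set r | exists u s, [/\ supp k u, 0 < s & r = (dot c u - p (u - s *: e)) / s]].
have s0 : supp k 0 by move=> i _; rewrite mxE.
have hs : has_sup Lo.
  split; first by exists ((dot c 0 - p (0 - 1 *: e)) / 1); exists 0, 1; split.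
  exists ((p (0 + 1 *: e) - dot c 0) / 1) => r [u [s [hu s1 ->]]].
  have := key u 0 s 1 hu s0 s1 ltr01.
  rewrite !divr1 mul1r; move=> h.
  rewrite ler_pdivrMr //; lra.
pose gm := sup Lo.
exists (c + (gm - c ik 0) *: e) => d hd.
set t := d ik 0; set u := d - t *: e.
have hu : supp k u.
  move=> i hi; rewrite !mxE; have [->|hne] := eqVneq i ik.
    by rewrite eqxx mulr1 subrr.
  have hi' : (k.+1 <= i)%N.
    rewrite ltn_neqAle hi andbT; apply/eqP => hki; move/eqP: hne; apply.
    by apply: val_inj; rewrite /= hki.
  by rewrite hd // mulr0 subr0.
have ed : d = u + t *: e by rewrite /u subrK.
have hdot : dot (c + (gm - c ik 0) *: e) d = dot c u + t * gm.
  have hcu : dot c u = dot c d - t * c ik 0 by rewrite /u dotBr dotZr dce.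
  rewrite dotDl dotZl dec -/t hcu; ring.
rewrite hdot.
have [t0|tn0] := eqVneq t 0.
  by rewrite t0 mul0r addr0 ed t0 scale0r addr0; apply: hc.
have [tp|tn] := ltrP 0 t.
  have : gm <= (p (u + t *: e) - dot c u) / t.
    apply: ge_sup; first by case: hs.
    move=> r [v [s [hv s1 ->]]].
    have := key v u s t hv hu s1 tp.
    move=> h; rewrite ler_pdivrMr // mulrAC ler_pdivlMr //; nra.
  rewrite ler_pdivlMr // ed => h; lra.
have tn' : t < 0 by rewrite lt_neqAle tn0.
have : (dot c u - p (u - (- t) *: e)) / (- t) <= gm.
  apply: sup_upper_bound => //; exists u, (-t); split => //; lra.
rewrite ler_pdivrMr; last by lra.
rewrite scaleNr opprK ed => h; lra.
Qed.

Lemma hb (p : 'cV[R]_n -> R) : convex_fun p -> p 0 = 0 ->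
  exists l : 'cV[R]_n, forall d, dot l d <= p d.
Proof.
move=> hcv p0.
have h : forall k, (k <= n)%N -> exists c : 'cV[R]_n, forall d, supp k d -> dot c d <= p d.
  elim=> [|k IH] hk.
    exists 0 => d hd; have -> : d = 0 by apply/matrixP => i j; rewrite (ord1 j) mxE hd.
    by rewrite dot0l p0.
  have [c hc] := IH (ltnW hk).
  exact: hb_step hk hcv c hc.
have [c hc] := h n (leqnn n).
by exists c => d; apply: hc => i hi; move: (ltn_ord i); rewrite ltnNge hi.
Qed.

End P6.

Section P7.
Variable R : realType.
Variable n : nat.

Lemma opt_cone (a : 'cV[R]_n -> R) (K : set 'cV[R]_n) :
  convex_fun a -> a 0 = 0 -> convex_set K -> K 0 -> (forall e, K e -> 0 <= a e) ->
  exists l, (forall d, dot l d <= a d) /\ (forall e, K e -> 0 <= dot l e).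
Proof.
move=> ha a0 hK K0 hpos.
pose S d := [set r | exists2 e, K e & r = a (d + e)].
pose p d := inf (S d).
have Sne : forall d, S d !=set0 by move=> d; exists (a (d + 0)); exists 0.
have Slb : forall d, has_lbound (S d).
  move=> d; exists (- a (- d)) => r [e Ke ->].
  have h2 : 0 <= (2^-1 : R) <= 1 by apply/andP; split; lra.
  have Ke2 : K (2^-1 *: e) by have := hK e 0 _ Ke K0 h2; rewrite scaler0 addr0.
  have := ha (d + e) (- d) _ h2.
  have -> : 2^-1 *: (d + e) + (1 - 2^-1) *: - d = 2^-1 *: e.
    have gen : forall x y : R, 2^-1 * (x + y) + (1 - 2^-1) * (- x) = 2^-1 * y.
      by move=> x y; field.
    by apply/matrixP => i j; rewrite !mxE gen.
  have := hpos _ Ke2; lra.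
have ple : forall d e, K e -> p d <= a (d + e).
  by move=> d e Ke; apply: ge_inf (Slb d) _ _; exists e.
have pcv : convex_fun p.
  move=> y z t ht; apply: le_eps => eps e0.
  have e2 : 0 < eps / 2 by rewrite divr_gt0.
  have hy : has_inf (S y) by split; [exact: Sne|exact: Slb].
  have hz : has_inf (S z) by split; [exact: Sne|exact: Slb].
  have [r1 [e1 Ke1 ->] h1] := inf_adherent e2 hy.
  have [r2 [e2' Ke2 ->] h2] := inf_adherent e2 hz.
  have Ke := hK e1 e2' t Ke1 Ke2 ht.
  have := ple (t *: y + (1 - t) *: z) _ Ke.
  have -> : t *: y + (1 - t) *: z + (t *: e1 + (1 - t) *: e2') =
            t *: (y + e1) + (1 - t) *: (z + e2').
    by rewrite !scalerDr addrACA.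
  move=> hle; apply: le_trans hle _.
  apply: le_trans (ha _ _ _ ht) _.
  move: ht => /andP [t0 t1].
  have q1 : t * a (y + e1) <= t * (p y + eps / 2) by apply: ler_wpM2l => //; apply: ltW.
  have q2 : (1 - t) * a (z + e2') <= (1 - t) * (p z + eps / 2).
    by apply: ler_wpM2l; [lra | apply: ltW].
  rewrite /p in q1 q2 *; nra.
have p0 : p 0 = 0.
  apply/eqP; rewrite eq_le; apply/andP; split.
    by have := ple 0 0 K0; rewrite addr0 a0.
  by apply: lb_le_inf; [exact: Sne| move=> r [e Ke ->]; rewrite add0r; apply: hpos].
have [l hl] := hb pcv p0.
exists l; split.
  by move=> d; apply: le_trans (hl d) _; have := ple d 0 K0; rewrite addr0.
move=> e Ke; have := le_trans (hl (- e)) (ple _ _ Ke).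
by rewrite addNr a0 dotNr oppr_le0.
Qed.

End P7.

Section P8.
Variable R : realType.
Variable n : nat.
Implicit Types (phi : 'cV[R]_n -> R).

Lemma cvx_ub_supp phi : convex_fun phi -> forall k, (k <= n)%N ->
  forall C, 0 <= C -> exists M, forall z, supp k z -> (forall i, `|z i 0| <= C) -> phi z <= M.
Proof.
move=> hcv; elim=> [|k IH] hk C C0.
  exists (phi 0) => z hz _; have -> : z = 0 by apply/matrixP => i j; rewrite (ord1 j) mxE hz.
  by [].
have [M1 hM1] := IH (ltnW hk) (2 * (C + 1)) ltac:(lra).
pose ik : 'I_n := Ordinal hk.
pose e : 'cV[R]_n := delta_mx ik 0.
pose B := 2 * (C + 1).
have B0 : 0 < B by rewrite /B; lra.
have h1d : forall s, `|s| <= B -> phi (s *: e) <= `|phi (B *: e)| + `|phi ((- B) *: e)|.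
  move=> s hs; move: hs; rewrite ler_norml => /andP [hs1 hs2].
  set t := (s + B) / (2 * B).
  have t01 : 0 <= t <= 1.
    by apply/andP; split; [rewrite divr_ge0; lra | rewrite ler_pdivrMr; lra].
  have := hcv (B *: e) ((- B) *: e) t t01.
  have -> : t *: (B *: e) + (1 - t) *: ((- B) *: e) = s *: e.
    have gen : forall q : R, t * (B * q) + (1 - t) * (- B * q) = s * q.
      by move=> q; rewrite /t; field; lra.
    by apply/matrixP => i j; rewrite !mxE gen.
  move=> h; apply: le_trans h _; move: t01 => /andP [t0 t1].
  have : t * phi (B *: e) <= t * `|phi (B *: e)| by apply: ler_wpM2l => //; apply: ler_norm.
  have : (1 - t) * phi ((- B) *: e) <= (1 - t) * `|phi ((- B) *: e)|.
    by apply: ler_wpM2l; [lra| apply: ler_norm].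
  have : 0 <= `|phi (B *: e)| := normr_ge0 _.
  have : 0 <= `|phi ((- B) *: e)| := normr_ge0 _.
  nra.
exists (2^-1 * M1 + 2^-1 * (`|phi (B *: e)| + `|phi ((- B) *: e)|)) => z hz hC.
set t := z ik 0; set u := z - t *: e.
have hu : supp k u.
  move=> i hi; rewrite !mxE; have [->|hne] := eqVneq i ik.
    by rewrite eqxx mulr1 subrr.
  have hi' : (k.+1 <= i)%N.
    rewrite ltn_neqAle hi andbT; apply/eqP => hki; move/eqP: hne; apply.
    by apply: val_inj; rewrite /= hki.
  by rewrite hz // mulr0 subr0.
have h2 : 0 <= (2^-1 : R) <= 1 by apply/andP; split; lra.
have := hcv (2 *: u) ((2 * t) *: e) 2^-1 h2.
have -> : 2^-1 *: (2 *: u) + (1 - 2^-1) *: ((2 * t) *: e) = z.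
  rewrite scalerA mulVf ?pnatr_eq0 // scale1r /u.
  have -> : (1 - 2^-1 : R) = 2^-1 by field.
  by rewrite scalerA mulrA mulVf ?pnatr_eq0 // mul1r subrK.
move=> h; apply: le_trans h _.
have q1 : phi (2 *: u) <= M1.
  apply: hM1; first by move=> i hi; rewrite mxE hu // mulr0.
  move=> i; rewrite mxE normrM ger0_norm //.
  have : `|u i 0| <= C + 1.
    rewrite /u !mxE; have [->|hne] := eqVneq i ik.
      by rewrite eqxx mulr1 subrr normr0; lra.
    rewrite mulr0 subr0; have := hC i; lra.
  lra.
have q2 : phi ((2 * t) *: e) <= `|phi (B *: e)| + `|phi ((- B) *: e)|.
  apply: h1d; rewrite normrM ger0_norm //; have := hC ik; rewrite /B; lra.
lra.
Qed.

Lemma cvx_bound phi : convex_fun phi -> forall C, exists M, 0 <= M /\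
  forall z, mnorm z <= C -> `|phi z| <= M.
Proof.
move=> hcv C; set C' := Num.max C 0.
have C'0 : 0 <= C' by rewrite /C' le_max lexx orbT.
have CC' : C <= C' by rewrite /C' le_max lexx.
have [M hM] := cvx_ub_supp hcv (leqnn n) C'0.
have hub : forall z, mnorm z <= C -> phi z <= M.
  move=> z hz; apply: hM.
    by move=> i hi; move: (ltn_ord i); rewrite ltnNge hi.
  by move=> i; apply: le_trans (entry_le _ _ _) _; lra.
exists (`|M| + 2 * `|phi 0|); split; first by have := normr_ge0 M; have := normr_ge0 (phi 0); lra.
move=> z hz; rewrite ler_norml; apply/andP; split; last first.
  have := hub z hz; have := ler_norm M; have := normr_ge0 (phi 0); lra.
have h2 : 0 <= (2^-1 : R) <= 1 by apply/andP; split; lra.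
have := hcv z (- z) 2^-1 h2.
have -> : 2^-1 *: z + (1 - 2^-1) *: - z = 0.
  have -> : (1 - 2^-1 : R) = 2^-1 by field.
  by rewrite scalerN subrr.
have := hub (- z) ltac:(by rewrite mnormN).
have := ler_norm M; have := ler_norm (phi 0); have := ler_norm (- phi 0); rewrite normrN.
lra.
Qed.

Lemma cvx_sub_bound phi x w M : 0 <= M ->
  (forall z, mnorm z <= mnorm x + 1 -> `|phi z| <= M) ->
  (forall d, dot w d <= phi (x + d) - phi x) -> mnorm w <= 2 * M.
Proof.
move=> M0 hM hw; have [->|w0] := eqVneq w 0; first by rewrite mnorm0; lra.
have hu : 0 < mnorm w.
  rewrite lt0r mnorm_ge0 andbT; apply/eqP => h; move/eqP: w0; apply; exact: mnorm_eq0.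
have := hw ((1 / mnorm w) *: w).
rewrite dotZr dot_sq.
have h1 : mnorm (x + (1 / mnorm w) *: w) <= mnorm x + 1.
  apply: le_trans (mnormD _ _) _; rewrite mnorm_scale_unit //; lra.
have := hM _ h1; have := hM x ltac:(lra).
rewrite ler_norml => /andP [a1 _]; rewrite ler_norml => /andP [_ a2].
have -> : 1 / mnorm w * mnorm w ^+ 2 = mnorm w by rewrite expr2 mulrA mul1r mulVf ?mul1r // lt0r_neq0.
lra.
Qed.

Lemma cvx_dist phi x d (xi : 'cV[R]_n) mu M : convex_fun phi -> 0 < mu -> 0 <= M ->
  (forall z, mnorm z <= mnorm x + 1 -> `|phi z| <= M) ->
  dot xi d + mu / 2 * mnorm d ^+ 2 + phi (x + d) - phi x <= 0 ->
  mnorm d <= 1 + 2 * (mnorm xi + 2 * M) / mu.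
Proof.
move=> hcv mu0 M0 hM h.
set r := mnorm d; have r0 : 0 <= r := mnorm_ge0 _.
have q0 : 0 <= 2 * (mnorm xi + 2 * M) / mu by rewrite divr_ge0 //; have := mnorm_ge0 xi; lra.
have [r1|r1] := lerP r 1; first by lra.
set u := x + (1 / r) *: d.
have dn0 : d != 0 by apply/eqP => d0; move: r1; rewrite /r d0 mnorm0; lra.
have hur : mnorm (u - x) = 1 by rewrite /u addrC addKr mnorm_scale_unit //; lra.
have hu : mnorm u <= mnorm x + 1 by have := mnormDB u x; lra.
have t01 : 0 <= 1 / r <= 1 by apply/andP; split; [rewrite divr_ge0; lra| rewrite ler_pdivrMr; lra].
have := hcv (x + d) x (1 / r) t01.
have -> : (1 / r) *: (x + d) + (1 - 1 / r) *: x = u.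
  have gen : forall a b : R, 1 / r * (a + b) + (1 - 1 / r) * a = a + 1 / r * b.
    by move=> a b; ring.
  by apply/matrixP => i j; rewrite /u !mxE gen.
move=> hc.
have hphi : phi (x + d) - phi x >= r * (phi u - phi x).
  have : r * phi u <= r * (1 / r * phi (x + d) + (1 - 1 / r) * phi x) by rewrite ler_pM2l; lra.
  have -> : r * (1 / r * phi (x + d) + (1 - 1 / r) * phi x) = phi (x + d) + (r - 1) * phi x.
    by field; lra.
  lra.
have a1 := hM u hu; have a2 := hM x ltac:(lra).
move: a1 a2; rewrite !ler_norml => /andP [a1 _] /andP [_ a2].
have hd : - (mnorm xi * r) <= dot xi d by have := dotCSabs xi d; rewrite ler_norml => /andP[].
have h5 : r * (- 2 * M) <= r * (phi u - phi x) by apply: ler_wpM2l => //; lra.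
have : r * (mu / 2 * r - mnorm xi - 2 * M) <= 0.
  have -> : r * (mu / 2 * r - mnorm xi - 2 * M) = mu / 2 * r ^+ 2 - mnorm xi * r + r * (- 2 * M) by ring.
  rewrite -/r in h; lra.
rewrite pmulr_rle0; last by lra.
move=> h3.
have : r <= 2 * (mnorm xi + 2 * M) / mu by rewrite ler_pdivlMr //; lra.
lra.
Qed.

End P8.

Section P9.
Variable R : realType.
Variable n : nat.
Implicit Types (f : 'cV[R]_n -> R).

Definition Lip f w e := forall y y', mnorm (y - w) < e -> mnorm (y' - w) < e ->
  `|f y - f y'| <= e^-1 * mnorm (y - y').

Lemma Lip_mon f : forall e e' w, 0 < e' -> e' <= e -> Lip f w e -> Lip f w e'.
Proof.
move=> e e' w e0 ee h y y' hy hy'.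
apply: le_trans (h y y' (lt_le_trans hy ee) (lt_le_trans hy' ee)) _.
apply: ler_wpM2r; first exact: mnorm_ge0.
by rewrite lef_pV2 ?posrE // (lt_le_trans e0 ee).
Qed.

Lemma Lip_loc f z : loc_lipschitz f z -> exists e, 0 < e /\ exists r, 0 < r /\
  forall w, mnorm (w - z) < r -> Lip f w e.
Proof.
move=> [d d0 [c hc]].
set e := Num.min (d / 2) (1 / (`|c| + 1)).
have c1 : 0 < `|c| + 1 by have := normr_ge0 c; lra.
have e0 : 0 < e by rewrite lt_min divr_gt0 //= divr_gt0.
have e1 : e <= d / 2 by rewrite ge_min lexx.
have e2 : e <= 1 / (`|c| + 1) by rewrite /e ge_min lexx orbT.
have ec : `|c| + 1 <= e^-1.
  by rewrite -[_ + 1]invrK lef_pV2 ?posrE ?invr_gt0 // -div1r.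
exists e; split => //; exists (d / 2); split; first by rewrite divr_gt0.
move=> w hw y y' hy hy'.
have hy1 : mnorm (y - z) < d by apply: le_lt_trans (mnorm_tri y w z) _; lra.
have hy2 : mnorm (y' - z) < d by apply: le_lt_trans (mnorm_tri y' w z) _; lra.
apply: le_trans (hc _ _ hy1 hy2) _.
apply: ler_wpM2r; first exact: mnorm_ge0.
by apply: le_trans (ler_norm c) _; lra.
Qed.

Lemma conc_mono f x e rho rho' : rho <= rho' -> conc f x e rho -> conc f x e rho'.
Proof.
move=> hr hc y z t hy hz ht /=.
have := hc y z t hy hz ht; rewrite /=.
rewrite sqnorm_convex.
move: ht => /andP [t0 t1].
have q : 0 <= t * (1 - t) * mnorm (y - z) ^+ 2.
  by rewrite mulr_ge0 ?sqr_ge0 // mulr_ge0 //; lra.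
have q2 : 0 <= (rho' - rho) / 2 * (t * (1 - t) * mnorm (y - z) ^+ 2).
  by rewrite mulr_ge0 // divr_ge0 //; lra.
move=> h; set A := mnorm y ^+ 2 in h *; set B := mnorm z ^+ 2 in h *.
set D := mnorm (y - z) ^+ 2 in h q q2 *.
nra.
Qed.

Lemma conc_rad f x e e' rho : e' <= e -> conc f x e rho -> conc f x e' rho.
Proof.
move=> he hc y z t hy hz ht; apply: hc => //; exact: lt_le_trans he.
Qed.

Definition Conc f w e := conc f w e e^-1.

Lemma Conc_mon f : forall e e' w, 0 < e' -> e' <= e -> Conc f w e -> Conc f w e'.
Proof.
move=> e e' w e0 ee h; apply: (conc_rad ee); apply: conc_mono h.
by rewrite lef_pV2 ?posrE // (lt_le_trans e0 ee).
Qed.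

Lemma Conc_loc f z : upper_C2 f z -> exists e, 0 < e /\ exists r, 0 < r /\
  forall w, mnorm (w - z) < r -> Conc f w e.
Proof.
move=> [d d0 [rho rho0 hc]].
set e := Num.min (d / 2) (1 / (rho + 1)).
have c1 : 0 < rho + 1 by lra.
have e0 : 0 < e by rewrite lt_min divr_gt0 //= divr_gt0.
have e1 : e <= d / 2 by rewrite ge_min lexx.
have e2 : e <= 1 / (rho + 1) by rewrite /e ge_min lexx orbT.
have ec : rho + 1 <= e^-1.
  by rewrite -[_ + 1]invrK lef_pV2 ?posrE ?invr_gt0 // -div1r.
exists e; split => //; exists (d / 2); split; first by rewrite divr_gt0.
move=> w hw; apply: (@conc_mono _ _ _ rho); first lra.
move=> y y' t hy hy' ht; apply: hc => //.
  by apply: le_lt_trans (mnorm_tri y w z) _; lra.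
by apply: le_lt_trans (mnorm_tri y' w z) _; lra.
Qed.

Definition Bnd f w e := `|f w| <= e^-1.

Lemma Bnd_mon f : forall e e' w, 0 < e' -> e' <= e -> Bnd f w e -> Bnd f w e'.
Proof.
move=> e e' w e0 ee h; apply: le_trans h _.
by rewrite lef_pV2 ?posrE // (lt_le_trans e0 ee).
Qed.

Lemma Bnd_loc f z : loc_lipschitz f z -> exists e, 0 < e /\ exists r, 0 < r /\
  forall w, mnorm (w - z) < r -> Bnd f w e.
Proof.
move=> [d d0 [c hc]].
set B := `|f z| + `|c| * d + 1.
have B0 : 0 < B by rewrite /B; have := normr_ge0 (f z); have := mulr_ge0 (normr_ge0 c) (ltW d0); lra.
exists B^-1; split; first by rewrite invr_gt0.
exists d; split => // w hw; rewrite /Bnd invrK.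
have h := hc w z hw ltac:(by rewrite subrr mnorm0).
have : `|c| * mnorm (w - z) <= `|c| * d by apply: ler_wpM2l; [exact: normr_ge0| exact: ltW].
have := ler_norm c; have := mnorm_ge0 (w - z).
have : c * mnorm (w - z) <= `|c| * mnorm (w - z) by apply: ler_wpM2r; [exact: mnorm_ge0| exact: ler_norm].
have : `|f w| <= `|f z| + `|f w - f z| by have := ler_normD (f z) (f w - f z); rewrite addrC subrK addrC.
rewrite /B; lra.
Qed.

Lemma est_glob f x xi y e rho B X Ry : 0 < e -> 0 <= rho ->
  (mnorm (y - x) < e / 2 -> f y <= f x + dot xi (y - x) + rho / 2 * mnorm (y - x) ^+ 2) ->
  `|f y| <= B -> `|f x| <= B -> mnorm xi <= X -> mnorm (y - x) <= Ry ->
  f y <= f x + dot xi (y - x) + (rho / 2 + 4 * (2 * B + X * Ry) / e ^+ 2) * mnorm (y - x) ^+ 2.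
Proof.
move=> e0 rho0 hloc hy hx hX hR.
set D := mnorm (y - x); have D0 : 0 <= D := mnorm_ge0 _.
have B0 : 0 <= B by apply: le_trans (normr_ge0 _) hy.
have X0 : 0 <= X by apply: le_trans (mnorm_ge0 _) hX.
have R0 : 0 <= Ry by apply: le_trans D0 hR.
have q : 0 <= 4 * (2 * B + X * Ry) / e ^+ 2 * D ^+ 2.
  by rewrite !mulr_ge0 ?sqr_ge0 ?invr_ge0 ?sqr_ge0 //; nra.
have [hD|hD] := ltrP D (e / 2).
  have := hloc hD; rewrite -/D; lra.
have c1 := dotCSabs xi (y - x); rewrite -/D in c1.
have c2 : mnorm xi * D <= X * Ry by apply: ler_pM => //; exact: mnorm_ge0.
have hD2 : e ^+ 2 <= 4 * D ^+ 2.
  have : e <= 2 * D by lra.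
  have e0' : 0 <= e by lra.
  move=> h; have -> : 4 * D ^+ 2 = (2 * D) ^+ 2 by ring.
  by rewrite ler_sqr ?nnegrE //; lra.
have : 2 * B + X * Ry <= 4 * (2 * B + X * Ry) / e ^+ 2 * D ^+ 2.
  rewrite mulrAC ler_pdivlMr ?exprn_gt0 //.
  have : 0 <= 2 * B + X * Ry by nra.
  nra.
move: c1; rewrite ler_norml => /andP [c1 _].
move: hy hx; rewrite !ler_norml => /andP [_ hy] /andP [hx _].
have : 0 <= rho / 2 * D ^+ 2 by rewrite mulr_ge0 ?sqr_ge0 // divr_ge0.
nra.
Qed.

End P9.

Section P10.
Variable R : realType.
Variables n m : nat.
Variables (g0 : 'cV[R]_n -> \bar R) (g : 'I_m -> 'cV[R]_n -> R) (phi : 'cV[R]_n -> R)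
  (O : set 'cV[R]_n)
  (mumin mumax Lmin Lmax Mq betaC betaS alpha tau : R)
  (x xi : nat -> 'cV[R]_n) (V : nat -> 'M[R]_(n, m))
  (mu : nat -> nat -> R) (L : nat -> nat -> 'cV[R]_m) (Q : nat -> nat -> 'M[R]_n)
  (xbar y v : nat -> nat -> 'cV[R]_n) (lam : nat -> nat -> 'cV[R]_m)
  (jk : nat -> nat).
Hypothesis SA : standing_assumption g0 g phi O.
Hypothesis RUN : iMBA_run g0 g phi mumin mumax Lmin Lmax Mq betaC betaS alpha tau
    x xi V mu L Q xbar y v lam jk.

Definition feas z := nonpos (gvec g z).
Definition f0 z := fine (g0 z).
Definition Fk k j z := Fkj (f0 (x k)) (x k) (xi k) (Q k j) phi z.

Lemma Fobj_feas z : feas z -> Fobj g0 g phi z = (f0 z + phi z)%:E.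
Proof.
move=> hz; rewrite /Fobj asboolT // adde0.
have hf : g0 z \is a fin_num by apply: (sa_g0_fin SA); apply: (sa_Gamma_sub SA).
by rewrite -(fineK hf) /f0 EFinD.
Qed.

Lemma x_feas k : feas (x k).
Proof.
elim: k => [|k _]; first exact: (it_x0 RUN).
rewrite (it_next RUN); exact: (proj1 (it_accept RUN k)).
Qed.

Lemma inner k j : (j <= jk k)%N ->
  [/\ (Q k j)^T = Q k j /\
        (forall d, mu k j * mnorm d ^+ 2 <= dot d (Q k j *m d) <= (mu k j + Mq) * mnorm d ^+ 2),
        [/\ Sset g (x k) (V k) (L k j) (xbar k j),
            (forall z, Sset g (x k) (V k) (L k j) z -> Fk k j (xbar k j) <= Fk k j z) &
            (forall z, Sset g (x k) (V k) (L k j) z ->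
               (forall z', Sset g (x k) (V k) (L k j) z' -> Fk k j z <= Fk k j z') -> z = xbar k j)],
        lsubdiff phi (y k j) (v k j) /\ (forall i, 0 <= lam k j i 0),
        Fk k j (y k j) <= Fk k j (x k) /\
        Num.max (- dot (lam k j) (Gfun g (y k j) (x k) (V k) (L k j))) 0 +
           infnorm (pospart (Gfun g (y k j) (x k) (V k) (L k j)))
          <= betaC / 2 * mnorm (y k j - x k) ^+ 2 &
        mnorm (xi k + Q k j *m (y k j - x k) + v k j + V k *m lam k j
               + dot (L k j) (lam k j) *: (y k j - x k))
          <= betaS * mnorm (y k j - x k)].
Proof. by move=> h; have := it_inner RUN h. Qed.

Lemma Fk_x k j : Fk k j (x k) = f0 (x k) + phi (x k).
Proof. by rewrite /Fk /Fkj subrr dot0r dot0l mulr0 !addr0. Qed.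

Lemma Fk_diff k j z : Fk k j z - Fk k j (x k) =
  dot (xi k) (z - x k) + 2^-1 * dot (z - x k) (Q k j *m (z - x k)) + phi z - phi (x k).
Proof. rewrite Fk_x /Fk /Fkj; ring. Qed.

Lemma mu_pos k j : (j <= jk k)%N -> mumin <= mu k j.
Proof.
elim: j => [|j IH] hj; first by have /andP[] := it_mu0 RUN k.
have h := IH (ltnW hj).
have [_ ] := it_reject RUN hj.
have m0 : 0 < mumin by have /andP[] := it_mu RUN.
have t1 := it_tau RUN.
case: ifP => _ [_ ->]; last by [].
have : mu k j <= tau * mu k j by rewrite ler_pMl //; lra.
lra.
Qed.

Lemma dist_bound (Cxi M C0 : R) : 0 <= M ->
  (forall k, mnorm (xi k) <= Cxi) -> (forall k, mnorm (x k) <= C0) ->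
  (forall z, mnorm z <= C0 + 1 -> `|phi z| <= M) ->
  forall k j z, (j <= jk k)%N -> Fk k j z <= Fk k j (x k) ->
  mnorm (z - x k) <= 1 + 2 * (Cxi + 2 * M) / mumin.
Proof.
move=> M0 hxi hx hM k j z hj hF.
have m0 : 0 < mumin by have /andP[] := it_mu RUN.
have [[_ hQ] _ _ _ _] := inner hj.
have hmu := mu_pos hj.
have := @cvx_dist _ _ phi (x k) (z - x k) (xi k) (mu k j) M (sa_phi_cvx SA) ltac:(lra) M0.
move=> /(_ ltac:(by move=> w hw; apply: hM; have := hx k; lra)).
rewrite (addrC (x k)) subrK.
have hd := Fk_diff k j z.
have /andP [q1 _] := hQ (z - x k).
move=> /(_ ltac:(lra)) h; apply: le_trans h _.
rewrite lerD2l -!mulrA; apply: ler_wpM2l; first lra.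
have hX : mnorm (xi k) <= Cxi := hxi k.
have a0 : 0 <= mnorm (xi k) + 2 * M by have := mnorm_ge0 (xi k); lra.
apply: (@le_trans _ _ ((mnorm (xi k) + 2 * M) / mumin)).
  by apply: ler_wpM2l => //; rewrite lef_pV2 ?posrE //; lra.
by apply: ler_wpM2r; [rewrite invr_ge0; lra | lra].
Qed.

Lemma Gfun_entry z s W Lv i :
  Gfun g z s W Lv i 0 = g i s + dot (col i W) (z - s) + 2^-1 * mnorm (z - s) ^+ 2 * Lv i 0.
Proof.
rewrite /Gfun !mxE; congr (_ + _ + _).
by rewrite /dot; apply: eq_bigr => a _; rewrite !mxE.
Qed.

Lemma infnorm_ge p (a : 'cV[R]_p) i : a i 0 <= infnorm (pospart a).
Proof.
apply: (@le_trans _ _ `|pospart a i 0|); last first.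
  by rewrite /infnorm; exact: le_bigmax.
rewrite mxE; apply: le_trans (ler_norm _); rewrite le_max lexx //.
Qed.


Variables (Ry Cg0 Cg : R).
Hypothesis hRy : forall k j, (j <= jk k)%N -> mnorm (y k j - x k) <= Ry.
Hypothesis hest0 : forall k z, feas z -> mnorm (z - x k) <= Ry ->
  f0 z <= f0 (x k) + dot (xi k) (z - x k) + Cg0 * mnorm (z - x k) ^+ 2.
Hypothesis hestg : forall k i z, mnorm (z - x k) <= Ry ->
  g i z <= g i (x k) + dot (col i (V k)) (z - x k) + Cg * mnorm (z - x k) ^+ 2.

Lemma feasL k j : (j <= jk k)%N -> (forall i, betaC + 2 * Cg <= L k j i 0) -> feas (y k j).
Proof.
move=> hj hL i; rewrite mxE.
have [_ _ _ [_ hres] _] := inner hj.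
set G := Gfun g _ _ _ _ in hres.
have h1 := infnorm_ge G i.
have h2 : 0 <= Num.max (- dot (lam k j) G) 0 by rewrite le_max lexx orbT.
have hG := Gfun_entry (y k j) (x k) (V k) (L k j) i; rewrite -/G in hG.
have he := @hestg k i (y k j) (hRy hj).
set D := mnorm (y k j - x k) ^+ 2 in hres hG he.
have D0 : 0 <= D by rewrite /D sqr_ge0.
have := hL i; nra.
Qed.

Lemma mu_reject k j : (j <= jk k)%N -> feas (y k j) ->
  ~ accepted g0 g phi alpha (x k) (y k j) -> mu k j < alpha + 2 * Cg0.
Proof.
move=> hj hf hna; rewrite ltNge; apply/negP => hmu; apply: hna; split => //.
rewrite !Fobj_feas //; last exact: x_feas.
rewrite -EFinB lee_fin.
have [[_ hQ] _ _ [hF _] _] := inner hj.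
have hd := Fk_diff k j (y k j).
have /andP [q1 _] := hQ (y k j - x k).
have he := @hest0 k (y k j) hf (hRy hj).
set D := mnorm (y k j - x k) ^+ 2 in q1 he *.
have D0 : 0 <= D by rewrite /D sqr_ge0.
nra.
Qed.

Definition T1 := betaC + 2 * Cg.
Definition T2 := alpha + 2 * Cg0.
Definition Smax := Num.max 1 (tau * T1 / Lmin).
Definition MuMax := Num.max mumax (tau * T2).

Lemma invariant k j : (j <= jk k)%N ->
  (exists s, 1 <= s <= Smax /\ L k j = s *: L k 0) /\ mu k j <= MuMax.
Proof.
have t1 := it_tau RUN.
have [L0 _] : 0 < Lmin /\ Lmin <= Lmax by apply/andP; exact: (it_L RUN).
elim: j => [|j IH] hj.
  split; first by exists 1; rewrite scale1r lexx le_max lexx.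
  have /andP [_ h] := it_mu0 RUN k; apply: le_trans h _; rewrite le_max lexx //.
have [[s [hs hLs]] hmu] := IH (ltnW hj).
have hjj : (j < jk k)%N := hj.
have [hna hcase] := it_reject RUN hjj.
have hmu0 := mu_pos (ltnW hj).
have m0 : 0 < mumin by have /andP[] := it_mu RUN.
move: hcase; case: ifP => hfe [-> ->].
  split; first by exists s.
  have hf : feas (y k j) by move/asboolP: hfe.
  have := mu_reject (ltnW hj) hf hna.
  rewrite /MuMax le_max; move=> h; apply/orP; right.
  rewrite /T2 ler_pM2l; lra.
have hnf : ~ feas (y k j) by move=> h; move: hfe; rewrite asboolT.
have [i hi] : exists i, L k j i 0 < T1.
  apply: contrapT => hn; apply: hnf; apply: feasL (ltnW hj) _ => i.
  by rewrite leNgt; apply/negP => h; apply: hn; exists i.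
split; last by [].
exists (tau * s); split; last by rewrite hLs scalerA.
have hl := it_L0 RUN k i; move: hl => /andP [hl1 _].
rewrite hLs mxE in hi.
have s1 : 1 <= s by case/andP: hs.
apply/andP; split; first by nra.
rewrite /Smax le_max; apply/orP; right.
have : s * Lmin < T1 by nra.
move=> h; rewrite -mulrA ler_pM2l; last lra.
by rewrite ler_pdivlMr //; lra.
Qed.

End P10.

Section P11.
Variable R : realType.
Variables n m : nat.
Variables (g0 : 'cV[R]_n -> \bar R) (g : 'I_m -> 'cV[R]_n -> R) (phi : 'cV[R]_n -> R)
  (O : set 'cV[R]_n)
  (mumin mumax Lmin Lmax Mq betaC betaS alpha tau : R)
  (x xi : nat -> 'cV[R]_n) (V : nat -> 'M[R]_(n, m))
  (mu : nat -> nat -> R) (L : nat -> nat -> 'cV[R]_m) (Q : nat -> nat -> 'M[R]_n)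
  (xbar y v : nat -> nat -> 'cV[R]_n) (lam : nat -> nat -> 'cV[R]_m)
  (jk : nat -> nat).
Hypothesis SA : standing_assumption g0 g phi O.
Hypothesis RUN : iMBA_run g0 g phi mumin mumax Lmin Lmax Mq betaC betaS alpha tau
    x xi V mu L Q xbar y v lam jk.


Local Notation feas := (@feas R n m g).
Local Notation Fk := (@Fk R n g0 phi x xi Q).

Lemma L_nonneg k j : (j <= jk k)%N -> forall i, 0 <= L k j i 0.
Proof.
have t1 := it_tau RUN.
have [L0 _] : 0 < Lmin /\ Lmin <= Lmax by apply/andP; exact: (it_L RUN).
elim: j => [|j IH] hj i.
  by have /andP [h _] := it_L0 RUN k i; lra.
have [_ hcase] := it_reject RUN hj.
have h := IH (ltnW hj) i.
by move: hcase; case: ifP => _ [-> _] //; rewrite mxE mulr_ge0 //; lra.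
Qed.

Lemma Sset_convex (s : 'cV[R]_n) (W : 'M[R]_(n,m)) (Lv : 'cV[R]_m) : (forall i, 0 <= Lv i 0) -> convex_set (Sset g s W Lv).
Proof.
move=> hL z1 z2 t h1 h2 ht i.
have e1 := h1 i; have e2 := h2 i.
rewrite !Gfun_entry in e1 e2 *.
have -> : t *: z1 + (1 - t) *: z2 - s = t *: (z1 - s) + (1 - t) *: (z2 - s).
  have gen : forall a b c : R, t * a + (1 - t) * b - c = t * (a - c) + (1 - t) * (b - c).
    by move=> a b c; ring.
  by apply/matrixP => a b; rewrite !mxE gen.
rewrite dotDr !dotZr sqnorm_convex.
move: ht => /andP [t0 t1].
set A := mnorm (z1 - s) ^+ 2; set B := mnorm (z2 - s) ^+ 2.
set D := mnorm (z1 - s - (z2 - s)) ^+ 2.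
have D0 : 0 <= t * (1 - t) * D by rewrite mulr_ge0 ?sqr_ge0 // mulr_ge0 //; lra.
have Li := hL i.
set c1 := dot (col i W) (z1 - s) in e1 *; set c2 := dot (col i W) (z2 - s) in e2 *.
set gs := g i s in e1 e2 *.
have q2 : 0 <= 2^-1 * (t * (1 - t) * D) * Lv i 0.
  by apply: mulr_ge0 => //; apply: mulr_ge0 => //; lra.
have f1 : t * (gs + c1 + 2^-1 * A * Lv i 0) <= 0 by rewrite mulr_ge0_le0.
have f2 : (1 - t) * (gs + c2 + 2^-1 * B * Lv i 0) <= 0 by rewrite mulr_ge0_le0 //; lra.
have -> : gs + (t * c1 + (1 - t) * c2) + 2^-1 * (t * A + (1 - t) * B - t * (1 - t) * D) * Lv i 0
  = t * (gs + c1 + 2^-1 * A * Lv i 0) + (1 - t) * (gs + c2 + 2^-1 * B * Lv i 0) - 2^-1 * (t * (1 - t) * D) * Lv i 0 by ring.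
lra.
Qed.

Lemma dotQ_sym (Qm : 'M[R]_n) a b : Qm^T = Qm -> dot a (Qm *m b) = dot b (Qm *m a).
Proof. by move=> hs; rewrite dot_mulmx hs dotC. Qed.

Lemma csub_lsub (w xb : 'cV[R]_n) : (forall d, dot w d <= phi (xb + d) - phi xb) ->
  lsubdiff phi xb w.
Proof.
move=> hw; exists (fun=> xb), (fun=> w); split.
- by move=> e e0; exists 0%N => k _; rewrite subrr mnorm0.
- by move=> e e0; exists 0%N => k _; rewrite /= subrr normr0.
- move=> k e e0; exists 1 => // z _.
  have := hw (z - xb); rewrite (addrC xb) subrK.
  have := mulr_ge0 (ltW e0) (mnorm_ge0 (z - xb)); lra.
- by move=> e e0; exists 0%N => k _; rewrite subrr mnorm0.
Qed.

Lemma rn_ncone p (C : set 'cV[R]_p) xb yv : C xb ->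
  (forall z, C z -> dot yv (z - xb) <= 0) -> ncone C xb yv.
Proof.
move=> hC hy; split => //; exists (fun=> xb), (fun=> yv); split => //.
- by move=> e e0; exists 0%N => k _; rewrite subrr mnorm0.
- move=> k; split => // e e0; exists 1 => // z hz _.
  have := hy z hz; have := mulr_ge0 (ltW e0) (mnorm_ge0 (z - xb)); lra.
- by move=> e e0; exists 0%N => k _; rewrite subrr mnorm0.
Qed.

Lemma opt_at k : let j := jk k in let xb := xbar k j in
  exists w, (forall d, dot w d <= phi (xb + d) - phi xb) /\
    forall z, Sset g (x k) (V k) (L k j) z ->
      dot (- (xi k + Q k j *m (xb - x k) + w)) (z - xb) <= 0.
Proof.
move=> j xb.
have hj : (j <= jk k)%N by [].
have [[hsym hQ] [hxS hmin _] _ _ _] := inner RUN hj.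
have hcv := sa_phi_cvx SA.
set gv := xi k + Q k j *m (xb - x k).
pose a d := phi (xb + d) - phi xb + dot gv d.
pose K := [set e | Sset g (x k) (V k) (L k j) (xb + e)].
have SC := Sset_convex (L_nonneg hj).
have acv : convex_fun a.
  move=> d1 d2 t ht; rewrite /a.
  have -> : xb + (t *: d1 + (1 - t) *: d2) = t *: (xb + d1) + (1 - t) *: (xb + d2).
    have gen : forall p q r : R, p + (t * q + (1 - t) * r) = t * (p + q) + (1 - t) * (p + r).
      by move=> p q r; ring.
    by apply/matrixP => i i'; rewrite !mxE gen.
  have := hcv (xb + d1) (xb + d2) t ht.
  rewrite dotDr !dotZr; lra.
have a0 : a 0 = 0 by rewrite /a addr0 subrr dot0r addr0.
have Kcv : convex_set K.
  move=> e1 e2 t h1 h2 ht; rewrite /K /=.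
  have -> : xb + (t *: e1 + (1 - t) *: e2) = t *: (xb + e1) + (1 - t) *: (xb + e2).
    have gen : forall p q r : R, p + (t * q + (1 - t) * r) = t * (p + q) + (1 - t) * (p + r).
      by move=> p q r; ring.
    by apply/matrixP => i i'; rewrite !mxE gen.
  exact: SC.
have K0 : K 0 by rewrite /K /= addr0.
have Kpos : forall e, K e -> 0 <= a e.
  move=> e hK.
  set c := dot e (Q k j *m e).
  have c0 : 0 <= c by have /andP [h _] := hQ e; apply: le_trans h; rewrite mulr_ge0 ?sqr_ge0 //;
    have := mu_pos RUN hj; have /andP [] := it_mu RUN; lra.
  have key : forall t, 0 < t <= 1 -> 0 <= a e + t * (c / 2).
    move=> t /andP [t0 t1].
    have hzt : Sset g (x k) (V k) (L k j) (xb + t *: e).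
      have -> : xb + t *: e = t *: (xb + e) + (1 - t) *: xb.
        have gen : forall p q : R, p + t * q = t * (p + q) + (1 - t) * p by move=> p q; ring.
        by apply/matrixP => i i'; rewrite !mxE gen.
      by apply: SC => //; apply/andP; split; lra.
    have hm := hmin _ hzt.
    have hd1 := Fk_diff g0 phi x xi Q k j (xb + t *: e).
    have hd2 := Fk_diff g0 phi x xi Q k j xb.
    rewrite /Fk in hm.
    have E1 : xb + t *: e - x k = (xb - x k) + t *: e by rewrite addrAC.
    rewrite E1 in hd1.
    set aV := xb - x k in hd1 hd2 *.
    have E3 : dot (aV + t *: e) (Q k j *m (aV + t *: e)) =
        dot aV (Q k j *m aV) + 2 * t * dot (Q k j *m aV) e + t ^+ 2 * c.
      rewrite mulmxDr -scalemxAr dotDl !dotDr !dotZl !dotZr (dotQ_sym aV e hsym).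
      rewrite (dotC e); rewrite /c; ring.
    have E4 : dot (xi k) (aV + t *: e) = dot (xi k) aV + t * dot (xi k) e.
      by rewrite dotDr dotZr.
    rewrite E3 E4 in hd1.
    have hphi := hcv (xb + e) xb t ltac:(apply/andP; split; lra).
    have ec : t *: (xb + e) + (1 - t) *: xb = xb + t *: e.
      have gen : forall p q : R, t * (p + q) + (1 - t) * p = p + t * q by move=> p q; ring.
      by apply/matrixP => i i'; rewrite !mxE gen.
    rewrite ec in hphi.
    have E2 : a e = phi (xb + e) - phi xb + dot (xi k) e + dot (Q k j *m (xb - x k)) e.
      by rewrite /a /gv dotDl; ring.
    have : 0 <= t * (a e + t * (c / 2)).
      rewrite E2 -/aV.
      have hxb : xb - x k = aV by [].
      have hd2' : Fk k j xb - Fk k j (x k) = dot (xi k) aV + 2^-1 * dot aV (Q k j *m aV) + phi xb - phi (x k).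
        by rewrite hd2.
      have q : t * phi (xb + e) + (1 - t) * phi xb - phi xb = t * (phi (xb + e) - phi xb) by ring.
      rewrite -/xb in hm.
      have D1 : 0 <= t * dot (xi k) e + t * dot (Q k j *m aV) e + t ^+ 2 * (c / 2) + phi (xb + t *: e) - phi xb.
        have h0 : 0 <= Fk k j (xb + t *: e) - Fk k j xb by rewrite subr_ge0.
        have e5 : Fk k j (xb + t *: e) - Fk k j xb = (Fk k j (xb + t *: e) - Fk k j (x k)) - (Fk k j xb - Fk k j (x k)) by ring.
        rewrite e5 hd1 hd2' in h0.
        lra.
      lra.
    by rewrite pmulr_rge0.
  apply: le_eps => eps e0.
  set t := Num.min 1 (eps / (c / 2 + 1)).
  have t0 : 0 < t by rewrite lt_min ltr01 divr_gt0 //; lra.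
  have t1 : t <= 1 by rewrite ge_min lexx.
  have t2 : t <= eps / (c / 2 + 1) by rewrite /t ge_min lexx orbT.
  have := key t ltac:(by apply/andP).
  have : t * (c / 2) <= eps.
    have : t * (c / 2 + 1) <= eps by rewrite -ler_pdivlMr //; lra.
    nra.
  lra.
have [l [hl1 hl2]] := opt_cone acv a0 Kcv K0 Kpos.
exists (l - gv); split.
  by move=> d; rewrite dotBl; have := hl1 d; rewrite /a; lra.
move=> z hz; rewrite addrC subrK dotNl oppr_le0.
by apply: hl2; rewrite /K /= addrC subrK.
Qed.

End P11.

Section P12.
Variable R : realType.
Variables n m : nat.
Variables (g0 : 'cV[R]_n -> \bar R) (g : 'I_m -> 'cV[R]_n -> R) (phi : 'cV[R]_n -> R)
  (O : set 'cV[R]_n)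
  (mumin mumax Lmin Lmax Mq betaC betaS alpha tau : R)
  (x xi : nat -> 'cV[R]_n) (V : nat -> 'M[R]_(n, m))
  (mu : nat -> nat -> R) (L : nat -> nat -> 'cV[R]_m) (Q : nat -> nat -> 'M[R]_n)
  (xbar y v : nat -> nat -> 'cV[R]_n) (lam : nat -> nat -> 'cV[R]_m)
  (jk : nat -> nat).
Hypothesis SA : standing_assumption g0 g phi O.
Hypothesis RUN : iMBA_run g0 g phi mumin mumax Lmin Lmax Mq betaC betaS alpha tau
    x xi V mu L Q xbar y v lam jk.



Local Notation K k := (jk k).

Lemma final_step (Y : R) (Bx BL BV Bxi BQ Bxb : R) :
  (forall k, mnorm (x k) <= Bx) -> (forall k, mnorm (L k (jk k)) <= BL) ->
  (forall k, mnorm (V k) <= BV) -> (forall k, mnorm (xi k) <= Bxi) ->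
  (forall k, mnorm (Q k (jk k)) <= BQ) -> (forall k, mnorm (xbar k (jk k)) <= Bxb) ->
  0 <= Y ->
  (forall k, inU (L k (jk k)) (Q k (jk k))) ->
  (forall k, Sset g (x k) (V k) (L k (jk k)) (xbar k (jk k))) ->
  (forall k, exists yv, mnorm yv <= Y /\
      ncone (Sset g (x k) (V k) (L k (jk k))) (xbar k (jk k)) yv /\
      forall lb, Lam g (x k) (V k) (L k (jk k)) (xbar k (jk k)) yv lb ->
        Mset g phi (x k) (L k (jk k)) (V k) (xi k) (Q k (jk k)) (xbar k (jk k)) lb) ->
  (forall s0 L0 V0 xi0 Q0 x0,
     cluster_pt x (fun k => L k (jk k)) V xi (fun k => Q k (jk k))
                (fun k => xbar k (jk k)) s0 L0 V0 xi0 Q0 x0 ->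
     bmp g s0 L0 V0 xi0 Q0 x0) ->
  exists khat : nat, exists2 beta : R, 0 < beta &
    forall k, (khat <= k)%N ->
      exists2 lb : 'cV[R]_m,
        Mset g phi (x k) (L k (jk k)) (V k) (xi k) (Q k (jk k)) (xbar k (jk k)) lb
        & mnorm lb <= beta.
Proof.
move=> hx hL hV hxi hQ hxb Y0 hU hS hY hbmp.
apply: contrapT => hn.
have hj : forall j : nat, exists k, (j <= k)%N /\ forall lb,
    Mset g phi (x k) (L k (jk k)) (V k) (xi k) (Q k (jk k)) (xbar k (jk k)) lb ->
    j.+1%:R < mnorm lb.
  move=> j; apply: contrapT => hj; apply: hn; exists j; exists j.+1%:R; first by rewrite ltr0Sn.
  move=> k hk; apply: contrapT => hk'; apply: hj; exists k; split => // lb hlb.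
  rewrite ltNge; apply/negP => hle; apply: hk'; by exists lb.
have [kf hkf] := choice hj.
have [s1 [hs1 [x0 cx]]] := bw_mx (fun t => hx (kf t)).
have [s2 [hs2 [L0 cL]]] := bw_mx (fun t => hL (kf (s1 t))).
have [s3 [hs3 [V0 cV]]] := bw_mx (fun t => hV (kf (s1 (s2 t)))).
have [s4 [hs4 [xi0 cxi]]] := bw_mx (fun t => hxi (kf (s1 (s2 (s3 t))))).
have [s5 [hs5 [Q0 cQ]]] := bw_mx (fun t => hQ (kf (s1 (s2 (s3 (s4 t)))))).
have [s6 [hs6 [xb0 cxb]]] := bw_mx (fun t => hxb (kf (s1 (s2 (s3 (s4 (s5 t))))))).
pose s t := s1 (s2 (s3 (s4 (s5 (s6 t))))).
have hs : incr s by do 5 apply: incr_comp => //.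
have cx' : mx_cvg (fun t => x (kf (s t))) x0.
  exact: (mx_cvg_sub (u := fun t => x (kf (s1 t)))) (incr_comp hs2 (incr_comp hs3 (incr_comp hs4 (incr_comp hs5 hs6)))) cx.
have cL' : mx_cvg (fun t => L (kf (s t)) (jk (kf (s t)))) L0.
  exact: (mx_cvg_sub (u := fun t => L (kf (s1 (s2 t))) (jk (kf (s1 (s2 t)))))) (incr_comp hs3 (incr_comp hs4 (incr_comp hs5 hs6))) cL.
have cV' : mx_cvg (fun t => V (kf (s t))) V0.
  exact: (mx_cvg_sub (u := fun t => V (kf (s1 (s2 (s3 t)))))) (incr_comp hs4 (incr_comp hs5 hs6)) cV.
have cxi' : mx_cvg (fun t => xi (kf (s t))) xi0.
  exact: (mx_cvg_sub (u := fun t => xi (kf (s1 (s2 (s3 (s4 t))))))) (incr_comp hs5 hs6) cxi.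
have cQ' : mx_cvg (fun t => Q (kf (s t)) (jk (kf (s t)))) Q0.
  exact: (mx_cvg_sub (u := fun t => Q (kf (s1 (s2 (s3 (s4 (s5 t)))))) (jk (kf (s1 (s2 (s3 (s4 (s5 t))))))))) hs6 cQ.
have cxb' : mx_cvg (fun t => xbar (kf (s t)) (jk (kf (s t)))) xb0 := cxb.
have getN : forall eps, 0 < eps -> exists N, forall t, (N <= t)%N ->
    mnorm (x (kf (s t)) - x0) < eps /\ mnorm (L (kf (s t)) (jk (kf (s t))) - L0) < eps /\
        mnorm (V (kf (s t)) - V0) < eps /\ mnorm (xi (kf (s t)) - xi0) < eps /\
        mnorm (Q (kf (s t)) (jk (kf (s t))) - Q0) < eps /\
        mnorm (xbar (kf (s t)) (jk (kf (s t))) - xb0) < eps.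
  move=> eps e0.
  have [N1 h1] := cx' _ e0; have [N2 h2] := cL' _ e0; have [N3 h3] := cV' _ e0.
  have [N4 h4] := cxi' _ e0; have [N5 h5] := cQ' _ e0; have [N6 h6] := cxb' _ e0.
  exists (maxn N1 (maxn N2 (maxn N3 (maxn N4 (maxn N5 N6))))) => t ht.
  by split; [|split; [|split; [|split; [|split]]]];
    [apply: h1 | apply: h2 | apply: h3 | apply: h4 | apply: h5 | apply: h6];
    apply: leq_trans ht; lia.
have hcl : cluster_pt x (fun k => L k (jk k)) V xi (fun k => Q k (jk k))
                (fun k => xbar k (jk k)) x0 L0 V0 xi0 Q0 xb0.
  move=> eps e0 N; have [N' hN'] := getN _ e0.
  exists (kf (s (maxn N N'))).
    apply: leq_trans (proj1 (hkf _)).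
    apply: leq_trans (incr_ge hs _); exact: leq_maxl.
  by have [? [? [? [? [? ?]]]]] := hN' (maxn N N') (leq_maxr _ _).
have [kap kap0 [d d0 hb]] := hbmp _ _ _ _ _ _ hcl.
have [N0 hN0] := @archi_inv R (kap * Y + 1)^-1 ltac:(rewrite invr_gt0; have := mulr_ge0 (ltW kap0) Y0; lra).
have [N' hN'] := getN _ d0.
set t := maxn N0 N'.
have [a1 [a2 [a3 [a4 [a5 a6]]]]] := hN' t (leq_maxr _ _).
set k := kf (s t).
have [yv [hyv [hnc hM]]] := hY k.
have [lb hlb hlbn] := hb _ _ _ _ _ (hU k) a1 a2 a3 a4 a5 _ (hS k) a6 _ hnc.
have := proj2 (hkf (s t)) lb (hM _ hlb).
have hst : (N0 <= s t)%N by apply: leq_trans (incr_ge hs t); exact: leq_maxl.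
have : kap * Y + 1 < N0.+1%:R.
  have kp : 0 < kap * Y + 1 by have := mulr_ge0 (ltW kap0) Y0; lra.
  by move: hN0; rewrite ltf_pV2 ?posrE ?ltr0Sn.
have : N0.+1%:R <= (s t).+1%:R :> R by rewrite ler_nat ltnS.
have : kap * mnorm yv <= kap * Y by apply: ler_wpM2l => //; exact: ltW.
lra.
Qed.

End P12.

Section P13.
Variable R : realType.
Variables n m : nat.
Variables (g0 : 'cV[R]_n -> \bar R) (g : 'I_m -> 'cV[R]_n -> R) (phi : 'cV[R]_n -> R)
  (O : set 'cV[R]_n)
  (mumin mumax Lmin Lmax Mq betaC betaS alpha tau : R)
  (x xi : nat -> 'cV[R]_n) (V : nat -> 'M[R]_(n, m))
  (mu : nat -> nat -> R) (L : nat -> nat -> 'cV[R]_m) (Q : nat -> nat -> 'M[R]_n)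
  (xbar y v : nat -> nat -> 'cV[R]_n) (lam : nat -> nat -> 'cV[R]_m)
  (jk : nat -> nat).
Hypothesis SA : standing_assumption g0 g phi O.
Hypothesis RUN : iMBA_run g0 g phi mumin mumax Lmin Lmax Mq betaC betaS alpha tau
    x xi V mu L Q xbar y v lam jk.



Local Notation feas := (@feas R n m g).
Local Notation f0 := (@f0 R n g0).
Local Notation Fk := (@Fk R n g0 phi x xi Q).

Lemma lip_cont (f : 'cV[R]_n -> R) z zs : loc_lipschitz f z -> mx_cvg zs z ->
  forall eps, 0 < eps -> exists N, forall j, (N <= j)%N -> `|f (zs j) - f z| <= eps.
Proof.
move=> [d d0 [c hc]] hz eps e0.
set c' := `|c| + 1.
have c'0 : 0 < c' by rewrite /c'; have := normr_ge0 c; lra.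
set r := Num.min d (eps / c').
have r0 : 0 < r by rewrite lt_min d0 divr_gt0.
have r1 : r <= d by rewrite ge_min lexx.
have r2 : r <= eps / c' by rewrite /r ge_min lexx orbT.
have [N hN] := hz r r0; exists N => j hj.
have hj' := hN j hj.
have h := hc (zs j) z (lt_le_trans hj' r1) ltac:(by rewrite subrr mnorm0).
apply: le_trans h _.
have : c * mnorm (zs j - z) <= c' * mnorm (zs j - z).
  by apply: ler_wpM2r; [exact: mnorm_ge0 | have := ler_norm c; rewrite /c'; lra].
have : c' * mnorm (zs j - z) <= c' * (eps / c') by apply: ler_wpM2l; [lra| lra].
have -> : c' * (eps / c') = eps by rewrite mulrC divfK // lt0r_neq0.
lra.
Qed.

Lemma feas_closed zs z : (forall j, feas (zs j)) -> mx_cvg zs z -> feas z.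
Proof.
move=> hf hz i; rewrite mxE; apply: le_eps => eps e0; rewrite add0r.
have [N hN] := lip_cont (sa_g_lip SA i z) hz e0.
have := hN N (leqnn N); have := hf N i; rewrite mxE ler_norml.
move=> h1 /andP [h2 _]; lra.
Qed.

Lemma mnorm_closed p q (zs : nat -> 'M[R]_(p,q)) z C : (forall j, mnorm (zs j) <= C) -> mx_cvg zs z ->
  mnorm z <= C.
Proof.
move=> hb hz; apply: le_eps => eps e0.
have [N hN] := hz eps e0.
have := mnormDB z (zs N); rewrite mnormB; have := hN N (leqnn N); have := hb N; lra.
Qed.

Lemma Sset_self k j : Sset g (x k) (V k) (L k j) (x k).
Proof.
move=> i; rewrite Gfun_entry subrr dot0r mnorm0 expr0n /= mulr0 mul0r !addr0.
by have := x_feas RUN k i; rewrite mxE.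
Qed.

Lemma Qentry (Qm : 'M[R]_n) c : Qm^T = Qm -> (forall d, 0 <= dot d (Qm *m d)) ->
  (forall a, dot (delta_mx a 0) (Qm *m delta_mx a 0) <= c) -> forall a b, `|Qm a b| <= c.
Proof.
move=> hs hpos hd a b.
have E : forall a' b', dot (delta_mx a' 0) (Qm *m delta_mx b' 0) = Qm a' b'.
  move=> a' b'; rewrite dotC dot_delta mxE (bigD1 b') //= big1 ?addr0.
    by rewrite mxE !eqxx mulr1.
  by move=> i hi; rewrite mxE (negbTE hi) mulr0.
have Hs : Qm b a = Qm a b by rewrite -{1}hs mxE.
have h1 := hpos (delta_mx a 0 + delta_mx b 0).
have h2 := hpos (delta_mx a 0 - delta_mx b 0).
rewrite ?mulmxDr ?mulmxN ?dotDl ?dotDr ?dotNl ?dotNr !E ?Hs in h1 h2.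
have ha := hd a; have hb := hd b; rewrite !E in ha hb.
rewrite ler_norml; apply/andP; split; lra.
Qed.

Variable C0 : R.
Hypothesis hC0 : forall k, mnorm (x k) <= C0.
Hypothesis hbmp : forall s0 L0 V0 xi0 Q0 x0,
     cluster_pt x (fun k => L k (jk k)) V xi (fun k => Q k (jk k))
                (fun k => xbar k (jk k)) s0 L0 V0 xi0 Q0 x0 ->
     bmp g s0 L0 V0 xi0 Q0 x0.

Lemma main_sec : exists khat : nat, exists2 beta : R, 0 < beta &
    forall k, (khat <= k)%N ->
      exists2 lb : 'cV[R]_m,
        Mset g phi (x k) (L k (jk k)) (V k) (xi k) (Q k (jk k)) (xbar k (jk k)) lb
        & mnorm lb <= beta.
Proof.
have m0 : 0 < mumin by have /andP[] := it_mu RUN.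
pose A0 := [set z | feas z /\ mnorm z <= C0].
have A0b : forall z, A0 z -> mnorm z <= C0 by move=> z [].
have A0cl : forall zs z, (forall j, A0 (zs j)) -> mx_cvg zs z -> A0 z.
  move=> zs z h hz; split; first by apply: feas_closed hz => j; case: (h j).
  by apply: mnorm_closed hz => j; case: (h j).
have A0x : forall k, A0 (x k) by move=> k; split; [exact: x_feas RUN k| exact: hC0].
have A0O : forall z, A0 z -> O z by move=> z [hz _]; exact: (sa_Gamma_sub SA).
have [eL [eL0 hLip0]] : exists e, 0 < e /\ forall w, A0 w -> Lip f0 w e.
  apply: (unif A0b A0cl) _ (@Lip_mon _ _ f0) => z hz.
  have [e [e0 [r [r0 h]]]] := Lip_loc (sa_g0_lip SA (A0O _ hz)).
  by exists e; split => //; exists r; split => // w _; apply: h.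
set Cxi := eL^-1.
have hxi : forall k, mnorm (xi k) <= Cxi.
  move=> k; apply: (lsub_bound eL0 _ (hLip0 _ (A0x k))); first by rewrite invr_ge0 ltW.
  exact: (it_xi RUN k).
have [eg [eg0 hLipg]] : exists e, 0 < e /\ forall i w, A0 w -> Lip (g i) w e.
  apply: (@fin_pos _ m (fun i e => forall w, A0 w -> Lip (g i) w e)).
    move=> i; apply: (unif A0b A0cl) _ (@Lip_mon _ _ (g i)) => z hz.
    have [e [e0 [r [r0 h]]]] := Lip_loc (sa_g_lip SA i z).
    by exists e; split => //; exists r; split => // w _; apply: h.
  by move=> i e e' e0 ee h z hz; exact: (Lip_mon e0 ee (h z hz)).
have hcol : forall k i, mnorm (col i (V k)) <= eg^-1.
  move=> k i; apply: (lsub_bound eg0 _ (hLipg i _ (A0x k))); first by rewrite invr_ge0 ltW.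
  exact: (it_V RUN k i).
set BV := (n * m)%:R * eg^-1.
have hV : forall k, mnorm (V k) <= BV.
  move=> k; apply: mnorm_entries; first by rewrite invr_ge0 ltW.
  move=> a i; apply: le_trans (hcol k i); have := entry_le (col i (V k)) a 0.
  by rewrite mxE.
have [M1 [M10 hM1]] := cvx_bound (sa_phi_cvx SA) (C0 + 1).
set Ry := 1 + 2 * (Cxi + 2 * M1) / mumin.
have hRz := dist_bound SA RUN M10 hxi hC0 hM1.
have hRyy : forall k j, (j <= jk k)%N -> mnorm (y k j - x k) <= Ry.
  move=> k j hj; apply: (hRz k j) => //.
  by have [_ _ _ [h _] _] := inner RUN hj.
have hRyb : forall k, mnorm (xbar k (jk k) - x k) <= Ry.
  move=> k; apply: (hRz k (jk k)) => //.
  by have [_ [_ hmin _] _ _ _] := inner RUN (leqnn (jk k)); apply: hmin; apply: Sset_self.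
have Ry0 : 0 <= Ry by have := hRyy 0%N 0%N (leq0n _); have := mnorm_ge0 (y 0%N 0%N - x 0%N); lra.
have [e0 [e00 hC0c]] : exists e, 0 < e /\ forall w, A0 w -> Conc f0 w e.
  apply: (unif A0b A0cl) _ (@Conc_mon _ _ f0) => z hz.
  have [e [e0 [r [r0 h]]]] := Conc_loc (sa_g0_uC2 SA (A0O _ hz)).
  by exists e; split => //; exists r; split => // w _; apply: h.
pose A1 := [set z | feas z /\ mnorm z <= C0 + Ry].
have A1b : forall z, A1 z -> mnorm z <= C0 + Ry by move=> z [].
have A1cl : forall zs z, (forall j, A1 (zs j)) -> mx_cvg zs z -> A1 z.
  move=> zs z h hz; split; first by apply: feas_closed hz => j; case: (h j).
  by apply: mnorm_closed hz => j; case: (h j).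
have [eB [eB0 hB0]] : exists e, 0 < e /\ forall w, A1 w -> Bnd f0 w e.
  apply: (unif A1b A1cl) _ (@Bnd_mon _ _ f0) => z [hz _].
  have [e [e0' [r [r0 h]]]] := Bnd_loc (sa_g0_lip SA (sa_Gamma_sub SA hz)).
  by exists e; split => //; exists r; split => // w _; apply: h.
set Cg0 := e0^-1 / 2 + 4 * (2 * eB^-1 + Cxi * Ry) / e0 ^+ 2.
have hest0 : forall k z, feas z -> mnorm (z - x k) <= Ry ->
    f0 z <= f0 (x k) + dot (xi k) (z - x k) + Cg0 * mnorm (z - x k) ^+ 2.
  move=> k z hz hzR.
  have hA1 : A1 z by split => //; have := mnormDB z (x k); have := hC0 k; lra.
  have hA1x : A1 (x k) by split; [exact: x_feas RUN k| have := hC0 k; lra].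
  apply: (est_glob e00 _ _ (hB0 _ hA1) (hB0 _ hA1x) (hxi k) hzR).
    by rewrite invr_ge0 ltW.
  apply: (lsub_uc2 e00 _ (hC0c _ (A0x k)) (it_xi RUN k)); by rewrite invr_ge0 ltW.
have [ec [ec0 hCg]] : exists e, 0 < e /\ forall i w, A0 w -> Conc (g i) w e.
  apply: (@fin_pos _ m (fun i e => forall w, A0 w -> Conc (g i) w e)).
    move=> i; apply: (unif A0b A0cl) _ (@Conc_mon _ _ (g i)) => z hz.
    have [e [e0' [r [r0 h]]]] := Conc_loc (sa_g_uC2 SA i z).
    by exists e; split => //; exists r; split => // w _; apply: h.
  by move=> i e e' e0' ee h z hz; exact: (Conc_mon e0' ee (h z hz)).
pose A2 := [set z : 'cV[R]_n | mnorm z <= C0 + Ry].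
have A2b : forall z, A2 z -> mnorm z <= C0 + Ry by [].
have A2cl : forall zs z, (forall j, A2 (zs j)) -> mx_cvg zs z -> A2 z.
  by move=> zs z h hz; apply: mnorm_closed hz.
have [eb [eb0 hBg]] : exists e, 0 < e /\ forall i w, A2 w -> Bnd (g i) w e.
  apply: (@fin_pos _ m (fun i e => forall w, A2 w -> Bnd (g i) w e)).
    move=> i; apply: (unif A2b A2cl) _ (@Bnd_mon _ _ (g i)) => z hz.
    have [e [e0' [r [r0 h]]]] := Bnd_loc (sa_g_lip SA i z).
    by exists e; split => //; exists r; split => // w _; apply: h.
  by move=> i e e' e0' ee h z hz; exact: (Bnd_mon e0' ee (h z hz)).
set Cg := ec^-1 / 2 + 4 * (2 * eb^-1 + eg^-1 * Ry) / ec ^+ 2.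
have hestg : forall k i z, mnorm (z - x k) <= Ry ->
    g i z <= g i (x k) + dot (col i (V k)) (z - x k) + Cg * mnorm (z - x k) ^+ 2.
  move=> k i z hzR.
  have hA2 : A2 z by rewrite /A2 /=; have := mnormDB z (x k); have := hC0 k; lra.
  have hA2x : A2 (x k) by rewrite /A2 /=; have := hC0 k; lra.
  apply: (est_glob ec0 _ _ (hBg _ _ hA2) (hBg _ _ hA2x) (hcol k i) hzR).
    by rewrite invr_ge0 ltW.
  apply: (lsub_uc2 ec0 _ (hCg _ _ (A0x k)) (it_V RUN k i)); by rewrite invr_ge0 ltW.
have hinv := invariant SA RUN hRyy hest0 hestg.
set Sm := Smax Lmin betaC tau Cg; set MM := MuMax mumax alpha tau Cg0.
have [L0 _] : 0 < Lmin /\ Lmin <= Lmax by apply/andP; exact: (it_L RUN).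
have Lmax0 : 0 <= Lmax by have /andP [] := it_L RUN; lra.
set BL := Sm * ((m * 1)%:R * Lmax).
have hL : forall k, mnorm (L k (jk k)) <= BL.
  move=> k; have [[s [hs ->]] _] := hinv k (jk k) (leqnn _).
  rewrite mnormZ ger0_norm; last by case/andP: hs => h _; lra.
  apply: ler_pM; first (by case/andP: hs => h _; lra); first exact: mnorm_ge0.
    by case/andP: hs.
  apply: mnorm_entries => // i j; rewrite (ord1 j).
  by have /andP [h1 h2] := it_L0 RUN k i; rewrite ger0_norm //; lra.
set BQ := (n * n)%:R * (MM + Mq).
have hMq : 0 < Mq := it_M RUN.
have hQ : forall k, mnorm (Q k (jk k)) <= BQ.
  move=> k; have [[hs hQb] _ _ _ _] := inner RUN (leqnn (jk k)).
  have [_ hmu] := hinv k (jk k) (leqnn _).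
  have hmu0 := mu_pos RUN (leqnn (jk k)).
  apply: mnorm_entries; first by have := le_trans hmu0 hmu; rewrite -/MM; lra.
  apply: Qentry => //.
    move=> d; have /andP [h _] := hQb d; apply: le_trans h; rewrite mulr_ge0 ?sqr_ge0 //; lra.
  move=> a; have /andP [_ h] := hQb (delta_mx a 0); apply: le_trans h _.
  rewrite -dot_sq dot_delta mxE !eqxx mulr1; rewrite -/MM in hmu; lra.
set Bxb := C0 + Ry.
have hxb : forall k, mnorm (xbar k (jk k)) <= Bxb.
  by move=> k; have := mnormDB (xbar k (jk k)) (x k); have := hRyb k; have := hC0 k; rewrite /Bxb; lra.
have [M2 [M20 hM2]] := cvx_bound (sa_phi_cvx SA) (C0 + Ry + 1).
set Y := Cxi + BQ * Ry + 2 * M2.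
have BQ0 : 0 <= BQ by apply: le_trans (mnorm_ge0 _) (hQ 0%N).
have Y0 : 0 <= Y by have := hxi 0%N; have := mnorm_ge0 (xi 0%N); have := mulr_ge0 BQ0 Ry0; rewrite /Y; lra.
apply: (final_step hC0 hL hV hxi hQ hxb Y0).
- move=> k; have [[hs hQb] _ _ _ _] := inner RUN (leqnn (jk k)).
  have hmu0 := mu_pos RUN (leqnn (jk k)).
  split => //; first by move=> i; exact: (L_nonneg RUN (leqnn (jk k)) i).
  move=> d; have /andP [h _] := hQb d; apply: le_trans h; rewrite mulr_ge0 ?sqr_ge0 //; lra.
- by move=> k; have [_ [h _ _] _ _ _] := inner RUN (leqnn (jk k)).
- move=> k.
  have [w [hw hnorm]] := opt_at SA RUN k.
  have [_ [hS _ _] _ _ _] := inner RUN (leqnn (jk k)).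
  set xb := xbar k (jk k) in hw hnorm hS *.
  set yv := - (xi k + Q k (jk k) *m (xb - x k) + w) in hnorm.
  exists yv; split; last split.
  + rewrite /yv mnormN; apply: le_trans (mnormD _ _) _; apply: le_trans (lerD (mnormD _ _) (lexx _)) _.
    have h1 := hxi k.
    have h2 : mnorm (Q k (jk k) *m (xb - x k)) <= BQ * Ry.
      apply: le_trans (mnorm_mulmx _ _) _.
      by apply: ler_pM; [exact: mnorm_ge0 | exact: mnorm_ge0 | exact: hQ | exact: hRyb].
    have h3 : mnorm w <= 2 * M2.
      apply: (cvx_sub_bound M20 _ hw) => z hz; apply: hM2.
      have := hxb k; rewrite /Bxb -/xb; lra.
    rewrite /Y; lra.
  + exact: rn_ncone.
  + move=> lb [hnc hgrad]; split => //; exists w; first exact: csub_lsub.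
    by rewrite hgrad /yv subrr.
- exact: hbmp.
Qed.

End P13.

Theorem proposition4p1 (R : realType) (n m : nat)
  (g0 : 'cV[R]_n -> \bar R) (g : 'I_m -> 'cV[R]_n -> R) (phi : 'cV[R]_n -> R)
  (O : set 'cV[R]_n)
  (mumin mumax Lmin Lmax Mq betaC betaS alpha tau : R)
  (x xi : nat -> 'cV[R]_n) (V : nat -> 'M[R]_(n, m))
  (mu : nat -> nat -> R) (L : nat -> nat -> 'cV[R]_m) (Q : nat -> nat -> 'M[R]_n)
  (xbar y v : nat -> nat -> 'cV[R]_n) (lam : nat -> nat -> 'cV[R]_m)
  (jk : nat -> nat) :
  (* Assumption 1 *)
  standing_assumption g0 g phi O ->
  (* the sequences are generated by Algorithm iMBA *)
  iMBA_run g0 g phi mumin mumax Lmin Lmax Mq betaC betaS alpha tau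
    x xi V mu L Q xbar y v lam jk ->
  (* Assumption 2 *)
  (forall k j, (j <= jk k)%N ->
     msubreg (fun z w => exists2 t : 'cV[R]_m, nonpos t &
                            w = Gfun g z (x k) (V k) (L k j) - t)
             (xbar k j) 0) ->
  (* Assumption 3 *)
  (exists C, forall k, mnorm (x k) <= C) ->
  (* Assumption 4: partial BMP at every cluster point of (u^k, xbar^k) *)
  (forall s0 L0 V0 xi0 Q0 x0,
     cluster_pt x (fun k => L k (jk k)) V xi (fun k => Q k (jk k))
                (fun k => xbar k (jk k)) s0 L0 V0 xi0 Q0 x0 ->
     bmp g s0 L0 V0 xi0 Q0 x0) ->
  exists khat : nat, exists2 beta : R, 0 < beta &
    forall k, (khat <= k)%N ->
      exists2 lb : 'cV[R]_m,
        Mset g phi (x k) (L k (jk k)) (V k) (xi k) (Q k (jk k)) (xbar k (jk k)) lb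
        & mnorm lb <= beta.
Proof.
move=> SA RUN _ [C0 hC0] hbmp.
exact: (main_sec SA RUN hC0 hbmp).
Qed.
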